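(* Let $(\psi,v)$ be a (sufficiently smooth) solution of $$-i\gamma^\mu\partial_\mu\psi=v\psi,\qquad -\Box v+v=\psi^*\gamma^0\psi\quad\text{on }[0,\infty)\times\mathbb{R}^2,$$ and let $\Psi$ solve $-\Box\Psi=i\gamma^\mu\partial_\mu\psi$ on $[0,\infty)\times\mathbb{R}^2$ with $(\Psi,\partial_t\Psi)|_{t=0}=(0,i\gamma^0\psi(0,\cdot))$ (so that $-i\gamma^\mu\partial_\mu\Psi=\psi$). Then: (i) with $\widetilde\psi=\psi+i\gamma^\mu\partial_\mu(v\psi)$, one has $-i\gamma^\mu\partial_\mu\widetilde\psi=\mathcal{N}_1(\psi,v)+\mathcal{N}_2(\psi,\psi^* )+2Q_0(\psi,v)$; (ii) with $\widetilde\Psi=\Psi-v\psi$, one has $-\Box\widetilde\Psi=-\mathcal{N}_1(\psi,v)-\mathcal{N}_2(\psi,\psi^* )-2Q_0(\psi,v)$; (iii) with $\tilde v=v-\psi^*\gamma^0\psi$, one has $-\Box\tilde v+\tilde v=\mathcal{N}_3(\psi,v)+\mathcal{N}_4(\psi,\psi^* )$; (iv) for every $I\in\mathbb{N}^6$, $\big[\widehat\Gamma^I\psi\big]_-=-i\big(I_2-\omega_a\gamma^0\gamma^a\big)\gamma^bG_b\widehat\Gamma^I\Psi$.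
   Context: Coordinates $(t,x)=(x_0,x_1,x_2)$, $r=|x|$, $\omega_a=x_a/r$, summation over repeated indices (Greek in $\{0,1,2\}$, Latin in $\{1,2\}$), $\eta=\mathrm{diag}(-1,1,1)$, $\Box=\eta^{\alpha\beta}\partial_\alpha\partial_\beta$, $\partial^\alpha=\eta^{\alpha\beta}\partial_\beta$. Dirac matrices: $\gamma^0=\begin{pmatrix}1&0\\0&-1\end{pmatrix}$, $\gamma^1=\begin{pmatrix}0&1\\-1&0\end{pmatrix}$, $\gamma^2=\begin{pmatrix}0&-i\\-i&0\end{pmatrix}$; $A^*$ is the conjugate transpose; $I_2$ the identity. Null form: $Q_0(f,g)=\partial_tf\,\partial_tg-\partial_af\,\partial_ag$. Nonlinearities: $\mathcal{N}_1(\psi,v)=i\,v\gamma^\mu\partial_\mu(v\psi)$, $\mathcal{N}_2(\psi,\psi^* )=(\psi^*\gamma^0\psi)\psi$, $\mathcal{N}_3(\psi,v)=i\,\partial_\mu(v\psi^* )\gamma^0\gamma^\mu\psi-i\,\psi^*\gamma^0\gamma^\mu\partial_\mu(v\psi)$, $\mathcal{N}_4(\psi,\psi^* )=2\eta^{\alpha\beta}\partial_\alpha\psi^*\gamma^0\partial_\beta\psi$. For $\phi:\mathbb{R}^{1+2}\to\mathbb{C}^2$, $[\phi]_-=\phi-\omega_a\gamma^0\gamma^a\phi$. Good derivatives $G_a=\partial_a+\omega_a\partial_t$. Modified vector fields: $\widehat\Omega=x_1\partial_2-x_2\partial_1-\tfrac12\gamma^1\gamma^2$, $\widehat L_a=t\partial_a+x_a\partial_t-\tfrac12\gamma^0\gamma^a$;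 $(\widehat\Gamma_1,\dots,\widehat\Gamma_6)=(\partial_t,\partial_1,\partial_2,\widehat\Omega,\widehat L_1,\widehat L_2)$, $\widehat\Gamma^I=\prod_k\widehat\Gamma_k^{i_k}$ for $I=(i_1,\dots,i_6)$. *)

(* Defs.v *)
From Stdlib Require Import Reals List.
From Coquelicot Require Import Coquelicot.
Open Scope R_scope.

(* Fields on R^{1+2}: functions of (t, x1, x2). *)
Definition fld (T : Type) := R -> R -> R -> T.

Inductive dir := Dt | D1 | D2.

Definition pdR (d : dir) (f : fld R) : fld R :=
  match d with
  | Dt => fun t x1 x2 => Derive (fun s => f s x1 x2) t
  | D1 => fun t x1 x2 => Derive (fun s => f t s x2) x1
  | D2 => fun t x1 x2 => Derive (fun s => f t x1 s) x2
  end.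

Definition ex_pdR (d : dir) (f : fld R) (t x1 x2 : R) : Prop :=
  match d with
  | Dt => ex_derive (fun s => f s x1 x2) t
  | D1 => ex_derive (fun s => f t s x2) x1
  | D2 => ex_derive (fun s => f t x1 s) x2
  end.

Definition iter_pdR (l : list dir) (f : fld R) : fld R := fold_right pdR f l.

Definition smoothR (f : fld R) : Prop :=
  forall (l : list dir) (t x1 x2 : R),
    continuous (fun p : R * R * R => iter_pdR l f (fst (fst p)) (snd (fst p)) (snd p))
               (t, x1, x2)
    /\ (forall d, ex_pdR d (iter_pdR l f) t x1 x2).

Definition pdC (d : dir) (f : fld C) : fld C :=
  fun t x1 x2 => (pdR d (fun t x1 x2 => Re (f t x1 x2)) t x1 x2,
                  pdR d (fun t x1 x2 => Im (f t x1 x2)) t x1 x2).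

Definition smoothC (f : fld C) : Prop :=
  smoothR (fun t x1 x2 => Re (f t x1 x2)) /\ smoothR (fun t x1 x2 => Im (f t x1 x2)).

Definition spinor := (C * C)%type.

Definition szero : spinor := (RtoC 0, RtoC 0).
Definition sadd (u w : spinor) : spinor := (fst u + fst w, snd u + snd w)%C.
Definition sopp (u : spinor) : spinor := (- fst u, - snd u)%C.
Definition ssub (u w : spinor) : spinor := sadd u (sopp w).
Definition sscal (c : C) (u : spinor) : spinor := (c * fst u, c * snd u)%C.
Definition hdot (u w : spinor) : C :=
  (Cconj (fst u) * fst w + Cconj (snd u) * snd w)%C.

Definition pdS (d : dir) (f : fld spinor) : fld spinor :=
  fun t x1 x2 => (pdC d (fun t x1 x2 => fst (f t x1 x2)) t x1 x2,
                  pdC d (fun t x1 x2 => snd (f t x1 x2)) t x1 x2).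

Definition smoothS (f : fld spinor) : Prop :=
  smoothC (fun t x1 x2 => fst (f t x1 x2)) /\ smoothC (fun t x1 x2 => snd (f t x1 x2)).

Record M2 := mkM2 { m11 : C; m12 : C; m21 : C; m22 : C }.

Definition mv (A : M2) (u : spinor) : spinor :=
  (m11 A * fst u + m12 A * snd u, m21 A * fst u + m22 A * snd u)%C.
Definition mm (A B : M2) : M2 :=
  mkM2 (m11 A * m11 B + m12 A * m21 B)%C (m11 A * m12 B + m12 A * m22 B)%C
       (m21 A * m11 B + m22 A * m21 B)%C (m21 A * m12 B + m22 A * m22 B)%C.
Definition madd (A B : M2) : M2 :=
  mkM2 (m11 A + m11 B)%C (m12 A + m12 B)%C (m21 A + m21 B)%C (m22 A + m22 B)%C.
Definition mscal (c : C) (A : M2) : M2 :=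
  mkM2 (c * m11 A)%C (c * m12 A)%C (c * m21 A)%C (c * m22 A)%C.
Definition I2 : M2 := mkM2 (RtoC 1) (RtoC 0) (RtoC 0) (RtoC 1).

Definition gamma0 : M2 := mkM2 (RtoC 1) (RtoC 0) (RtoC 0) (RtoC (-1)).
Definition gamma1 : M2 := mkM2 (RtoC 0) (RtoC 1) (RtoC (-1)) (RtoC 0).
Definition gamma2 : M2 := mkM2 (RtoC 0) (- Ci)%C (- Ci)%C (RtoC 0).
Definition gam (d : dir) : M2 :=
  match d with Dt => gamma0 | D1 => gamma1 | D2 => gamma2 end.
Definition eta (d : dir) : R := match d with Dt => -1 | _ => 1 end.

Definition sumS (F : dir -> spinor) : spinor := sadd (F Dt) (sadd (F D1) (F D2)).
Definition sumC (F : dir -> C) : C := (F Dt + (F D1 + F D2))%C.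
Definition sumR (F : dir -> R) : R := F Dt + (F D1 + F D2).

Definition dirac (f : fld spinor) : fld spinor :=
  fun t x1 x2 => sumS (fun mu => mv (gam mu) (pdS mu f t x1 x2)).

Definition boxR (f : fld R) : fld R :=
  fun t x1 x2 => sumR (fun mu => eta mu * pdR mu (pdR mu f) t x1 x2).
Definition boxC (f : fld C) : fld C :=
  fun t x1 x2 => sumC (fun mu => RtoC (eta mu) * pdC mu (pdC mu f) t x1 x2)%C.
Definition boxS (f : fld spinor) : fld spinor :=
  fun t x1 x2 => sumS (fun mu => sscal (RtoC (eta mu)) (pdS mu (pdS mu f) t x1 x2)).

Definition rmulS (v : fld R) (f : fld spinor) : fld spinor :=
  fun t x1 x2 => sscal (RtoC (v t x1 x2)) (f t x1 x2).

Definition Q0 (psi : fld spinor) (v : fld R) : fld spinor :=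
  fun t x1 x2 => sumS (fun mu => sscal (RtoC (- eta mu * pdR mu v t x1 x2)) (pdS mu psi t x1 x2)).

Definition N1 (psi : fld spinor) (v : fld R) : fld spinor :=
  fun t x1 x2 => sscal (Ci * RtoC (v t x1 x2))%C (dirac (rmulS v psi) t x1 x2).
Definition N2 (psi : fld spinor) : fld spinor :=
  fun t x1 x2 => sscal (hdot (psi t x1 x2) (mv gamma0 (psi t x1 x2))) (psi t x1 x2).
(* since v is real, d_mu (v psi^star) = (d_mu (v psi))^star *)
Definition N3 (psi : fld spinor) (v : fld R) : fld C :=
  fun t x1 x2 => sumC (fun mu =>
    (Ci * hdot (pdS mu (rmulS v psi) t x1 x2) (mv (mm gamma0 (gam mu)) (psi t x1 x2))
     - Ci * hdot (psi t x1 x2) (mv (mm gamma0 (gam mu)) (pdS mu (rmulS v psi) t x1 x2)))%C).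
Definition N4 (psi : fld spinor) : fld C :=
  fun t x1 x2 => sumC (fun mu =>
    (RtoC (2 * eta mu) * hdot (pdS mu psi t x1 x2) (mv gamma0 (pdS mu psi t x1 x2)))%C).

Definition rad (x1 x2 : R) : R := sqrt (x1 ^ 2 + x2 ^ 2).
Definition om1 (x1 x2 : R) : R := x1 / rad x1 x2.
Definition om2 (x1 x2 : R) : R := x2 / rad x1 x2.

Definition omgg (x1 x2 : R) : M2 :=
  madd (mscal (RtoC (om1 x1 x2)) (mm gamma0 gamma1))
       (mscal (RtoC (om2 x1 x2)) (mm gamma0 gamma2)).

Definition minus_part (x1 x2 : R) (u : spinor) : spinor := ssub u (mv (omgg x1 x2) u).

Definition gammaG (f : fld spinor) : fld spinor :=
  fun t x1 x2 =>
    sadd (mv gamma1 (sadd (pdS D1 f t x1 x2) (sscal (RtoC (om1 x1 x2)) (pdS Dt f t x1 x2))))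
         (mv gamma2 (sadd (pdS D2 f t x1 x2) (sscal (RtoC (om2 x1 x2)) (pdS Dt f t x1 x2)))).

Definition half : C := RtoC (1 / 2).
Definition Omega_hat (f : fld spinor) : fld spinor :=
  fun t x1 x2 =>
    ssub (sadd (sscal (RtoC x1) (pdS D2 f t x1 x2)) (sscal (RtoC (- x2)) (pdS D1 f t x1 x2)))
         (sscal half (mv (mm gamma1 gamma2) (f t x1 x2))).
Definition L1_hat (f : fld spinor) : fld spinor :=
  fun t x1 x2 =>
    ssub (sadd (sscal (RtoC t) (pdS D1 f t x1 x2)) (sscal (RtoC x1) (pdS Dt f t x1 x2)))
         (sscal half (mv (mm gamma0 gamma1) (f t x1 x2))).
Definition L2_hat (f : fld spinor) : fld spinor :=
  fun t x1 x2 =>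
    ssub (sadd (sscal (RtoC t) (pdS D2 f t x1 x2)) (sscal (RtoC x2) (pdS Dt f t x1 x2)))
         (sscal half (mv (mm gamma0 gamma2) (f t x1 x2))).

Definition multi6 := (nat * nat * nat * nat * nat * nat)%type.

Definition GammaI (I : multi6) (f : fld spinor) : fld spinor :=
  let '(i1, i2, i3, i4, i5, i6) := I in
  Nat.iter i1 (pdS Dt) (Nat.iter i2 (pdS D1) (Nat.iter i3 (pdS D2)
    (Nat.iter i4 Omega_hat (Nat.iter i5 L1_hat (Nat.iter i6 L2_hat f))))).

(* Main.v *)
Require Import Defs.
From Stdlib Require Import Reals Lra FunctionalExtensionality List ClassicalEpsilon Classical Nsatz.
From Coquelicot Require Import Coquelicot.
Open Scope R_scope.

Lemma locally_pair_le {U V : UniformSpace} (a : U) (b : V) (P : U * V -> Prop) :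
  locally (a, b) P -> filter_prod (locally a) (locally b) P.
Proof.
  intros [e He]. exists (ball a e) (ball b e).
  - exists e; auto.
  - exists e; auto.
  - intros x y Hx Hy. apply He. split; assumption.
Qed.

Lemma continuous_pair {T U V : UniformSpace} (f : T -> U) (g : T -> V) (x : T) :
  continuous f x -> continuous g x -> continuous (fun z => (f z, g z)) x.
Proof.
  intros Hf Hg P HP. apply locally_pair_le in HP.
  exact (filterlim_pair f g Hf Hg P HP).
Qed.

Definition C3 (f : R -> R -> R -> R) : Prop :=
  forall t x y, continuous (fun q : R*R*R => f (fst (fst q)) (snd (fst q)) (snd q)) (t,x,y).

Lemma C3_plus f g : C3 f -> C3 g -> C3 (fun t x y => f t x y + g t x y).
Proof. intros Hf Hg t x y. exact (continuous_plus _ _ _ (Hf t x y) (Hg t x y)). Qed.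
Lemma C3_mult f g : C3 f -> C3 g -> C3 (fun t x y => f t x y * g t x y).
Proof. intros Hf Hg t x y. exact (continuous_mult _ _ _ (Hf t x y) (Hg t x y)). Qed.
Lemma C3_opp f : C3 f -> C3 (fun t x y => - f t x y).
Proof. intros Hf t x y. exact (continuous_opp _ _ (Hf t x y)). Qed.
Lemma C3_minus f g : C3 f -> C3 g -> C3 (fun t x y => f t x y - g t x y).
Proof. intros. apply C3_plus; auto. apply C3_opp; auto. Qed.
Lemma C3_const c : C3 (fun _ _ _ => c).
Proof. intros t x y. apply continuous_const. Qed.
Lemma C3_t : C3 (fun t _ _ => t).
Proof. intros t x y. apply (continuous_comp (fun q : R*R*R => fst q) fst).
  apply continuous_fst. apply continuous_fst. Qed.
Lemma C3_x : C3 (fun _ x _ => x).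
Proof. intros t x y. apply (continuous_comp (fun q : R*R*R => fst q) snd).
  apply continuous_fst. apply continuous_snd. Qed.
Lemma C3_y : C3 (fun _ _ y => y).
Proof. intros t x y. apply continuous_snd. Qed.
Lemma C3_comp (g : R -> R) f : (forall z, continuous g z) -> C3 f -> C3 (fun t x y => g (f t x y)).
Proof. intros Hg Hf t x y. apply (continuous_comp (fun q : R*R*R => f (fst (fst q)) (snd (fst q)) (snd q)) g).
  apply Hf. apply Hg. Qed.

Lemma C3_at f t x y : C3 f ->
  forall (a b c : R -> R) s, continuous a s -> continuous b s -> continuous c s ->
  a s = t -> b s = x -> c s = y ->
  continuous (fun s => f (a s) (b s) (c s)) s.
Proof.
  intros Hf a b c s Ha Hb Hc <- <- <-.
  apply (continuous_comp (fun s => (a s, b s, c s)) (fun q : R*R*R => f (fst (fst q)) (snd (fst q)) (snd q))).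
  apply continuous_pair; auto. apply continuous_pair; auto.
  apply Hf.
Qed.

Lemma C3_slice_t f x y t : C3 f -> continuous (fun s => f s x y) t.
Proof. intros Hf. apply (C3_at f t x y Hf (fun s => s) (fun _ => x) (fun _ => y)); auto;
  try apply continuous_id; apply continuous_const. Qed.
Lemma C3_slice_x f t y x : C3 f -> continuous (fun s => f t s y) x.
Proof. intros Hf. apply (C3_at f t x y Hf (fun _ => t) (fun s => s) (fun _ => y)); auto;
  try apply continuous_id; apply continuous_const. Qed.
Lemma C3_slice_y f t x y : C3 f -> continuous (fun s => f t x s) y.
Proof. intros Hf. apply (C3_at f t x y Hf (fun _ => t) (fun _ => x) (fun s => s)); auto;
  try apply continuous_id; apply continuous_const. Qed.

Lemma C3_2d_gen f (a b c : R -> R -> R) u v :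
  C3 f -> continuity_2d_pt a u v -> continuity_2d_pt b u v -> continuity_2d_pt c u v ->
  continuity_2d_pt (fun u v => f (a u v) (b u v) (c u v)) u v.
Proof.
  intros Hf Ha Hb Hc. apply continuity_2d_pt_filterlim in Ha, Hb, Hc.
  apply continuity_2d_pt_filterlim.
  apply (continuous_comp (fun z : R*R => (a (fst z) (snd z), b (fst z) (snd z), c (fst z) (snd z))) (fun q : R*R*R => f (fst (fst q)) (snd (fst q)) (snd q)) (u,v)).
  apply continuous_pair; auto. apply continuous_pair; auto.
  apply Hf.
Qed.

Lemma C3_2d_tx f y u v : C3 f -> continuity_2d_pt (fun u v => f u v y) u v.
Proof. intros Hf. apply (C3_2d_gen f (fun u v => u) (fun u v => v) (fun _ _ => y)); auto.
  apply continuity_2d_pt_id1. apply continuity_2d_pt_id2. apply continuity_2d_pt_const. Qed.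
Lemma C3_2d_ty f x u v : C3 f -> continuity_2d_pt (fun u v => f u x v) u v.
Proof. intros Hf. apply (C3_2d_gen f (fun u v => u) (fun _ _ => x) (fun u v => v)); auto.
  apply continuity_2d_pt_id1. apply continuity_2d_pt_const. apply continuity_2d_pt_id2. Qed.
Lemma C3_2d_xy f t u v : C3 f -> continuity_2d_pt (fun u v => f t u v) u v.
Proof. intros Hf. apply (C3_2d_gen f (fun _ _ => t) (fun u v => u) (fun u v => v)); auto.
  apply continuity_2d_pt_const. apply continuity_2d_pt_id1. apply continuity_2d_pt_id2. Qed.

Lemma smooth_C3 f : smoothR f -> C3 f.
Proof. intros H t x y. exact (proj1 (H nil t x y)). Qed.
Lemma smooth_ex f d t x y : smoothR f -> ex_pdR d f t x y.
Proof. intros H. exact (proj2 (H nil t x y) d). Qed.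
Lemma iter_pdR_app l1 l2 f : iter_pdR (l1 ++ l2) f = iter_pdR l1 (iter_pdR l2 f).
Proof. unfold iter_pdR. apply fold_right_app. Qed.
Lemma smooth_pd f d : smoothR f -> smoothR (pdR d f).
Proof. intros H l t x y. specialize (H (l ++ d :: nil) t x y).
  rewrite iter_pdR_app in H. exact H. Qed.

Lemma smooth_class (P : (R -> R -> R -> R) -> Prop) :
  (forall h, P h -> C3 h) -> (forall h d t x y, P h -> ex_pdR d h t x y) ->
  (forall h d, P h -> P (pdR d h)) -> forall f, P f -> smoothR f.
Proof.
  intros H1 H2 H3 f Hf.
  assert (forall l, P (iter_pdR l f)) as Hl.
  { induction l as [|d l IH]; simpl; auto. }
  intros l t x y. split. apply H1, Hl. intros d; apply H2, Hl.
Qed.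

Lemma locally_2d_all (P : R -> R -> Prop) x y : (forall u v, P u v) -> locally_2d P x y.
Proof. intros H. exists (mkposreal 1 Rlt_0_1). intros; apply H. Qed.

Definition exAll f := forall d t x y, ex_pdR d f t x y.
Lemma smooth_exAll f : smoothR f -> exAll f.
Proof. intros H d t x y; apply smooth_ex, H. Qed.

Definition slice (d : dir) (f : fld R) t x y : R -> R :=
  match d with Dt => fun s => f s x y | D1 => fun s => f t s y | D2 => fun s => f t x s end.
Definition point (d : dir) (t x y : R) : R := match d with Dt => t | D1 => x | D2 => y end.
Lemma pdR_slice d f t x y : pdR d f t x y = Derive (slice d f t x y) (point d t x y).
Proof. destruct d; reflexivity. Qed.
Lemma ex_slice d f t x y : ex_pdR d f t x y = ex_derive (slice d f t x y) (point d t x y).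
Proof. destruct d; reflexivity. Qed.

Ltac fext := apply functional_extensionality; intro t;
  apply functional_extensionality; intro x; apply functional_extensionality; intro y.

Lemma pdR_plus d f g : exAll f -> exAll g ->
  pdR d (fun t x y => f t x y + g t x y) = fun t x y => pdR d f t x y + pdR d g t x y.
Proof. intros Hf Hg. fext.
  specialize (Hf d t x y); specialize (Hg d t x y). rewrite ex_slice in Hf, Hg.
  rewrite !pdR_slice.
  replace (slice d (fun t x y => f t x y + g t x y) t x y) with
    (fun s => slice d f t x y s + slice d g t x y s) by (destruct d; reflexivity).
  apply Derive_plus; auto. Qed.
Lemma pdR_mult d f g : exAll f -> exAll g ->
  pdR d (fun t x y => f t x y * g t x y) = fun t x y => pdR d f t x y * g t x y + f t x y * pdR d g t x y.
Proof. intros Hf Hg. fext.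
  specialize (Hf d t x y); specialize (Hg d t x y). rewrite ex_slice in Hf, Hg.
  rewrite !pdR_slice.
  replace (slice d (fun t x y => f t x y * g t x y) t x y) with
    (fun s => slice d f t x y s * slice d g t x y s) by (destruct d; reflexivity).
  rewrite Derive_mult; auto. destruct d; reflexivity. Qed.
Lemma pdR_opp d f :
  pdR d (fun t x y => - f t x y) = fun t x y => - pdR d f t x y.
Proof. fext. rewrite !pdR_slice.
  replace (slice d (fun t x y => - f t x y) t x y) with
    (fun s => - slice d f t x y s) by (destruct d; reflexivity).
  apply Derive_opp. Qed.
Lemma pdR_scal d c f :
  pdR d (fun t x y => c * f t x y) = fun t x y => c * pdR d f t x y.
Proof. fext. rewrite !pdR_slice.
  replace (slice d (fun t x y => c * f t x y) t x y) with
    (fun s => c * slice d f t x y s) by (destruct d; reflexivity).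
  apply Derive_scal. Qed.
Lemma pdR_const d c : pdR d (fun _ _ _ => c) = fun _ _ _ => 0.
Proof. apply functional_extensionality; intro t;
  apply functional_extensionality; intro x; apply functional_extensionality; intro y.
  destruct d; simpl in *; apply Derive_const. Qed.
Lemma pdR_minus d f g : exAll f -> exAll g ->
  pdR d (fun t x y => f t x y - g t x y) = fun t x y => pdR d f t x y - pdR d g t x y.
Proof. intros Hf Hg. unfold Rminus.
  assert (exAll (fun t x y => - g t x y)).
  { intros d' t x y; specialize (Hg d' t x y); rewrite ex_slice in *.
    replace (slice d' (fun t x y => - g t x y) t x y) with
    (fun s => - slice d' g t x y s) by (destruct d'; reflexivity). apply (ex_derive_opp (slice d' g t x y)); auto. }
  rewrite (pdR_plus d f (fun t x y => - g t x y)); auto. rewrite pdR_opp. reflexivity. Qed.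

Definition dt_ (d : dir) : R := match d with Dt => 1 | _ => 0 end.
Definition d1_ (d : dir) : R := match d with D1 => 1 | _ => 0 end.
Definition d2_ (d : dir) : R := match d with D2 => 1 | _ => 0 end.
Lemma pdR_t d : pdR d (fun t _ _ => t) = fun _ _ _ => dt_ d.
Proof. apply functional_extensionality; intro t;
  apply functional_extensionality; intro x; apply functional_extensionality; intro y.
  destruct d; simpl; try apply Derive_const. apply (Derive_id t). Qed.
Lemma pdR_x d : pdR d (fun _ x _ => x) = fun _ _ _ => d1_ d.
Proof. apply functional_extensionality; intro t;
  apply functional_extensionality; intro x; apply functional_extensionality; intro y.
  destruct d; simpl; try apply Derive_const. apply (Derive_id x). Qed.
Lemma pdR_y d : pdR d (fun _ _ y => y) = fun _ _ _ => d2_ d.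
Proof. apply functional_extensionality; intro t;
  apply functional_extensionality; intro x; apply functional_extensionality; intro y.
  destruct d; simpl; try apply Derive_const. apply (Derive_id y). Qed.

Lemma ex_plus f g : exAll f -> exAll g -> exAll (fun t x y => f t x y + g t x y).
Proof. intros Hf Hg d t x y. specialize (Hf d t x y); specialize (Hg d t x y). rewrite ex_slice in *.
  replace (slice d (fun t x y => f t x y + g t x y) t x y) with
    (fun s => slice d f t x y s + slice d g t x y s) by (destruct d; reflexivity).
  apply (ex_derive_plus (slice d f t x y) (slice d g t x y)); auto. Qed.
Lemma ex_mult f g : exAll f -> exAll g -> exAll (fun t x y => f t x y * g t x y).
Proof. intros Hf Hg d t x y. specialize (Hf d t x y); specialize (Hg d t x y). rewrite ex_slice in *.
  replace (slice d (fun t x y => f t x y * g t x y) t x y) with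
    (fun s => slice d f t x y s * slice d g t x y s) by (destruct d; reflexivity).
  apply (ex_derive_mult (slice d f t x y) (slice d g t x y)); auto. Qed.
Lemma ex_opp f : exAll f -> exAll (fun t x y => - f t x y).
Proof. intros Hf d t x y. specialize (Hf d t x y). rewrite ex_slice in *.
  replace (slice d (fun t x y => - f t x y) t x y) with
    (fun s => - slice d f t x y s) by (destruct d; reflexivity).
  apply (ex_derive_opp (slice d f t x y)); auto. Qed.

Lemma smooth_plus f g : smoothR f -> smoothR g -> smoothR (fun t x y => f t x y + g t x y).
Proof.
  intros Hf Hg.
  apply (smooth_class (fun h => exists f g, smoothR f /\ smoothR g /\ h = fun t x y => f t x y + g t x y)).
  - intros h (f' & g' & H1 & H2 & ->). apply C3_plus; apply smooth_C3; auto.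
  - intros h d t x y (f' & g' & H1 & H2 & ->). apply ex_plus; apply smooth_exAll; auto.
  - intros h d (f' & g' & H1 & H2 & ->). exists (pdR d f'), (pdR d g').
    split; [apply smooth_pd; auto|split; [apply smooth_pd; auto|]].
    apply pdR_plus; apply smooth_exAll; auto.
  - eauto.
Qed.

Lemma smooth_opp f : smoothR f -> smoothR (fun t x y => - f t x y).
Proof.
  intros Hf.
  apply (smooth_class (fun h => exists f, smoothR f /\ h = fun t x y => - f t x y)).
  - intros h (f' & H1 & ->). apply C3_opp; apply smooth_C3; auto.
  - intros h d t x y (f' & H1 & ->). apply ex_opp; apply smooth_exAll; auto.
  - intros h d (f' & H1 & ->). exists (pdR d f'). split. apply smooth_pd; auto. apply pdR_opp.
  - eauto.
Qed.

Inductive SP : fld R -> Prop :=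
 | SP1 : forall f g, smoothR f -> smoothR g -> SP (fun t x y => f t x y * g t x y)
 | SP2 : forall h1 h2, SP h1 -> SP h2 -> SP (fun t x y => h1 t x y + h2 t x y).

Lemma SP_C3 h : SP h -> C3 h.
Proof. induction 1. apply C3_mult; apply smooth_C3; auto. apply C3_plus; auto. Qed.
Lemma SP_ex h : SP h -> exAll h.
Proof. induction 1. apply ex_mult; apply smooth_exAll; auto. apply ex_plus; auto. Qed.

Lemma smooth_mult f g : smoothR f -> smoothR g -> smoothR (fun t x y => f t x y * g t x y).
Proof.
  intros Hf Hg. apply (smooth_class SP).
  - apply SP_C3.
  - intros h d t x y H; apply SP_ex; auto.
  - intros h d H. induction H.
    + rewrite pdR_mult by (apply smooth_exAll; auto).
      apply SP2; apply SP1; auto; apply smooth_pd; auto.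
    + rewrite pdR_plus by (apply SP_ex; auto). apply SP2; auto.
  - apply SP1; auto.
Qed.

Lemma smooth_basic_class h :
  ((exists c, h = fun _ _ _ => c) \/ h = (fun t _ _ => t) \/ h = (fun _ x _ => x) \/ h = (fun _ _ y => y)) ->
  smoothR h.
Proof.
  revert h. apply (smooth_class (fun h => (exists c, h = fun _ _ _ => c) \/ h = (fun t _ _ => t) \/ h = (fun _ x _ => x) \/ h = (fun _ _ y => y))).
  - intros h0 [[c ->]|[->|[->| ->]]]. apply C3_const. apply C3_t. apply C3_x. apply C3_y.
  - intros h0 d t x y [[c ->]|[->|[->| ->]]]; rewrite ex_slice; destruct d; simpl;
      first [apply ex_derive_const | apply ex_derive_id].
  - intros h0 d [[c ->]|[->|[->| ->]]]; left.
    exists 0; apply pdR_const. exists (dt_ d); apply pdR_t. exists (d1_ d); apply pdR_x. exists (d2_ d); apply pdR_y.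
Qed.
Lemma smooth_const c : smoothR (fun _ _ _ => c).
Proof. apply smooth_basic_class; eauto. Qed.
Lemma smooth_t : smoothR (fun t _ _ => t).
Proof. apply smooth_basic_class; eauto. Qed.
Lemma smooth_x : smoothR (fun _ x _ => x).
Proof. apply smooth_basic_class; eauto. Qed.
Lemma smooth_y : smoothR (fun _ _ y => y).
Proof. apply smooth_basic_class; eauto. Qed.
Lemma smooth_scal c f : smoothR f -> smoothR (fun t x y => c * f t x y).
Proof. intros; apply (smooth_mult (fun _ _ _ => c) f); auto. apply smooth_const. Qed.
Lemma smooth_minus f g : smoothR f -> smoothR g -> smoothR (fun t x y => f t x y - g t x y).
Proof. intros. apply (smooth_plus f (fun t x y => - g t x y)); auto. apply smooth_opp; auto. Qed.

Lemma schwarz_tx f t x y : smoothR f -> pdR Dt (pdR D1 f) t x y = pdR D1 (pdR Dt f) t x y.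
Proof.
  intros Hf.
  change (Derive (fun z => Derive (fun s => f z s y) x) t = Derive (fun z => Derive (fun s => f s z y) t) x).
  refine (Schwarz (fun u v => f u v y) t x _ _ _).
  - apply locally_2d_all. intros u v. repeat split.
    + exact (smooth_ex f Dt u v y Hf).
    + exact (smooth_ex f D1 u v y Hf).
    + exact (smooth_ex (pdR D1 f) Dt u v y (smooth_pd f D1 Hf)).
    + exact (smooth_ex (pdR Dt f) D1 u v y (smooth_pd f Dt Hf)).
  - exact (C3_2d_tx (pdR Dt (pdR D1 f)) y t x (smooth_C3 _ (smooth_pd _ _ (smooth_pd f D1 Hf)))).
  - exact (C3_2d_tx (pdR D1 (pdR Dt f)) y t x (smooth_C3 _ (smooth_pd _ _ (smooth_pd f Dt Hf)))).
Qed.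
Lemma schwarz_ty f t x y : smoothR f -> pdR Dt (pdR D2 f) t x y = pdR D2 (pdR Dt f) t x y.
Proof.
  intros Hf.
  change (Derive (fun z => Derive (fun s => f z x s) y) t = Derive (fun z => Derive (fun s => f s x z) t) y).
  refine (Schwarz (fun u v => f u x v) t y _ _ _).
  - apply locally_2d_all. intros u v. repeat split.
    + exact (smooth_ex f Dt u x v Hf).
    + exact (smooth_ex f D2 u x v Hf).
    + exact (smooth_ex (pdR D2 f) Dt u x v (smooth_pd f D2 Hf)).
    + exact (smooth_ex (pdR Dt f) D2 u x v (smooth_pd f Dt Hf)).
  - exact (C3_2d_ty (pdR Dt (pdR D2 f)) x t y (smooth_C3 _ (smooth_pd _ _ (smooth_pd f D2 Hf)))).
  - exact (C3_2d_ty (pdR D2 (pdR Dt f)) x t y (smooth_C3 _ (smooth_pd _ _ (smooth_pd f Dt Hf)))).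
Qed.
Lemma schwarz_xy f t x y : smoothR f -> pdR D1 (pdR D2 f) t x y = pdR D2 (pdR D1 f) t x y.
Proof.
  intros Hf.
  change (Derive (fun z => Derive (fun s => f t z s) y) x = Derive (fun z => Derive (fun s => f t s z) x) y).
  refine (Schwarz (fun u v => f t u v) x y _ _ _).
  - apply locally_2d_all. intros u v. repeat split.
    + exact (smooth_ex f D1 t u v Hf).
    + exact (smooth_ex f D2 t u v Hf).
    + exact (smooth_ex (pdR D2 f) D1 t u v (smooth_pd f D2 Hf)).
    + exact (smooth_ex (pdR D1 f) D2 t u v (smooth_pd f D1 Hf)).
  - exact (C3_2d_xy (pdR D1 (pdR D2 f)) t x y (smooth_C3 _ (smooth_pd _ _ (smooth_pd f D2 Hf)))).
  - exact (C3_2d_xy (pdR D2 (pdR D1 f)) t x y (smooth_C3 _ (smooth_pd _ _ (smooth_pd f D1 Hf)))).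
Qed.
Lemma schwarz f d1 d2 : smoothR f -> pdR d1 (pdR d2 f) = pdR d2 (pdR d1 f).
Proof.
  intros Hf. fext.
  destruct d1, d2; try reflexivity.
  apply schwarz_tx; auto. apply schwarz_ty; auto.
  symmetry; apply schwarz_tx; auto. apply schwarz_xy; auto.
  symmetry; apply schwarz_ty; auto. symmetry; apply schwarz_xy; auto.
Qed.

Lemma ball_R (x e y : R) : ball x e y <-> Rabs (y - x) < e.
Proof. unfold ball; simpl; unfold AbsRing_ball, abs, minus, plus, opp; simpl. tauto. Qed.

Lemma cont_eps (f : R -> R) x :
  (forall eps, 0 < eps -> exists d, 0 < d /\ forall y, Rabs (y - x) < d -> Rabs (f y - f x) < eps) ->
  continuous f x.
Proof.
  intros H P [e HP]. destruct (H e (cond_pos e)) as [d [Hd Hy]].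
  exists (mkposreal d Hd). intros y Hb. apply HP. apply ball_R. apply Hy. apply ball_R. exact Hb.
Qed.

Lemma cont_eps_inv (f : R -> R) x : continuous f x ->
  forall eps, 0 < eps -> exists d, 0 < d /\ forall y, Rabs (y - x) < d -> Rabs (f y - f x) < eps.
Proof.
  intros H eps He.
  assert (locally x (fun y => ball (f x) eps (f y))) as [d Hd].
  { apply H. exists (mkposreal eps He). auto. }
  exists d. split. apply cond_pos. intros y Hy. apply ball_R. apply Hd. apply ball_R. exact Hy.
Qed.

Lemma C3_eps G p1 p2 y : C3 G -> forall eps, 0 < eps -> exists d, 0 < d /\
  forall q1 q2 z, Rabs (q1 - p1) < d -> Rabs (q2 - p2) < d -> Rabs (z - y) < d ->
    Rabs (G q1 q2 z - G p1 p2 y) < eps.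
Proof.
  intros HG eps He.
  assert (locally (p1,p2,y) (fun q : R*R*R => ball (G p1 p2 y) eps (G (fst (fst q)) (snd (fst q)) (snd q)))) as [d Hd].
  { apply (HG p1 p2 y). exists (mkposreal eps He). auto. }
  exists d. split. apply cond_pos. intros q1 q2 z H1 H2 H3.
  apply ball_R. apply (Hd (q1,q2,z)). split. split; simpl; apply ball_R; auto. simpl; apply ball_R; auto.
Qed.

Lemma tube G p1 p2 a b : C3 G -> forall eps, 0 < eps -> exists d, 0 < d /\
  forall q1 q2 y, Rabs (q1 - p1) < d -> Rabs (q2 - p2) < d -> a <= y <= b ->
    Rabs (G q1 q2 y - G p1 p2 y) < eps.
Proof.
  intros HG eps He.
  assert (He2 : 0 < eps / 2) by lra.
  assert (Hd : forall y, exists d : posreal, forall q1 q2 z, Rabs (q1 - p1) < d -> Rabs (q2 - p2) < d -> Rabs (z - y) < d ->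
    Rabs (G q1 q2 z - G p1 p2 y) < eps / 2).
  { intros y. destruct (C3_eps G p1 p2 y HG (eps/2) He2) as [d [Hd H]]. exists (mkposreal d Hd). exact H. }
  destruct (choice _ Hd) as [delta Hdelta].
  destruct (compactness_value_1d a b delta) as [d Hcomp].
  exists d. split. apply cond_pos. intros q1 q2 y H1 H2 Hy.
  destruct (Rlt_dec (Rabs (G q1 q2 y - G p1 p2 y)) eps) as [ok|ko]; auto. exfalso.
  apply (Hcomp y Hy). intros [t [Ht [Hyt Hdt]]].
  apply ko.
  assert (A1 : Rabs (G q1 q2 y - G p1 p2 t) < eps / 2).
  { apply Hdelta; lra. }
  assert (A2 : Rabs (G p1 p2 y - G p1 p2 t) < eps / 2).
  { assert (0 < delta t) by apply cond_pos. apply Hdelta; try lra; unfold Rminus; rewrite Rplus_opp_r, Rabs_R0; lra. }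
  replace (G q1 q2 y - G p1 p2 y) with ((G q1 q2 y - G p1 p2 t) - (G p1 p2 y - G p1 p2 t)) by ring.
  eapply Rle_lt_trans. apply Rabs_triang. rewrite Rabs_Ropp. lra.
Qed.

Lemma C3_comp3 G a b c : C3 G -> C3 a -> C3 b -> C3 c ->
  C3 (fun t x y => G (a t x y) (b t x y) (c t x y)).
Proof.
  intros HG Ha Hb Hc t x y.
  apply (continuous_comp (fun q : R*R*R => (a (fst (fst q)) (snd (fst q)) (snd q), b (fst (fst q)) (snd (fst q)) (snd q), c (fst (fst q)) (snd (fst q)) (snd q)))
    (fun q : R*R*R => G (fst (fst q)) (snd (fst q)) (snd q))).
  apply continuous_pair. apply continuous_pair. apply Ha. apply Hb. apply Hc.
  apply HG.
Qed.

Lemma C3_exRInt G t x a b : C3 G -> ex_RInt (fun y => G t x y) a b.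
Proof. intros HG. apply (ex_RInt_continuous (V := R_CompleteNormedModule)). intros z _. apply C3_slice_y; auto. Qed.

Lemma int_eps G a b p1 p2 : a <= b -> C3 G -> forall eps, 0 < eps -> exists d, 0 < d /\
  forall q1 q2, Rabs (q1 - p1) < d -> Rabs (q2 - p2) < d ->
  Rabs (RInt (fun y => G q1 q2 y) a b - RInt (fun y => G p1 p2 y) a b) < eps.
Proof.
  intros Hab HG eps He.
  assert (He' : 0 < eps / (b - a + 1)) by (apply Rdiv_lt_0_compat; lra).
  destruct (tube G p1 p2 a b HG _ He') as [d [Hd Ht]].
  exists d; split; auto. intros q1 q2 H1 H2.
  assert (E : RInt (fun y => G q1 q2 y) a b - RInt (fun y => G p1 p2 y) a b =
              RInt (fun y => G q1 q2 y - G p1 p2 y) a b).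
  { symmetry. apply (RInt_minus (V := R_CompleteNormedModule)); apply C3_exRInt; auto. }
  rewrite E.
  eapply Rle_lt_trans. apply abs_RInt_le_const with (M := eps / (b - a + 1)); auto.
  - apply (ex_RInt_minus (V := R_NormedModule)); apply C3_exRInt; auto.
  - intros y Hy. left. apply Ht; auto.
  - apply Rlt_le_trans with ((b - a + 1) * (eps / (b - a + 1))).
    apply Rmult_lt_compat_r; auto; lra.
    right. field. lra.
Qed.

Lemma int_cont2 G a b p1 p2 : a <= b -> C3 G ->
  continuity_2d_pt (fun q1 q2 => RInt (fun y => G q1 q2 y) a b) p1 p2.
Proof.
  intros Hab HG eps. destruct (int_eps G a b p1 p2 Hab HG eps (cond_pos eps)) as [d [Hd H]].
  exists (mkposreal d Hd). intros u v Hu Hv. apply H; auto.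
Qed.

Lemma int_cont1 G a b p1 p2 : a <= b -> C3 G ->
  continuous (fun q1 => RInt (fun y => G q1 p2 y) a b) p1.
Proof.
  intros Hab HG. apply cont_eps. intros eps He.
  destruct (int_eps G a b p1 p2 Hab HG eps He) as [d [Hd H]].
  exists d. split; auto. intros y Hy. apply H; auto. unfold Rminus; rewrite Rplus_opp_r, Rabs_R0; auto.
Qed.

Lemma c2d_slice2 f u v : continuity_2d_pt f u v -> continuous (fun y => f u y) v.
Proof.
  intros H. apply cont_eps. intros eps He. destruct (H (mkposreal eps He)) as [d Hd].
  exists d; split. apply cond_pos. intros y Hy. apply Hd; auto.
  unfold Rminus; rewrite Rplus_opp_r, Rabs_R0; apply cond_pos.
Qed.
Lemma c2d_slice1 f u v : continuity_2d_pt f u v -> continuous (fun y => f y v) u.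
Proof.
  intros H. apply cont_eps. intros eps He. destruct (H (mkposreal eps He)) as [d Hd].
  exists d; split. apply cond_pos. intros y Hy. apply Hd; auto.
  unfold Rminus; rewrite Rplus_opp_r, Rabs_R0; apply cond_pos.
Qed.

Lemma ex_RInt_c2d f u a b : (forall v, continuity_2d_pt f u v) -> ex_RInt (fun y => f u y) a b.
Proof. intros H. apply (ex_RInt_continuous (V := R_CompleteNormedModule)). intros z _. apply c2d_slice2; auto. Qed.

Lemma deriv_int_2d (f ft : R -> R -> R) a b t :
  (forall u, ex_RInt (fun y => f u y) a b) -> (forall u v, continuity_2d_pt ft u v) ->
  (forall u v, is_derive (fun s => f s v) u (ft u v)) ->
  is_derive (fun s => RInt (fun y => f s y) a b) t (RInt (fun y => ft t y) a b).
Proof.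
  intros Hf Hft Hd.
  assert (E : forall u v, Derive (fun s => f s v) u = ft u v).
  { intros; apply is_derive_unique; auto. }
  replace (RInt (fun y => ft t y) a b) with (RInt (fun y => Derive (fun u => f u y) t) a b).
  2:{ apply RInt_ext. intros; apply E. }
  apply (is_derive_RInt_param f a b t).
  - apply filter_forall. intros x0 t0 _. exists (ft x0 t0). apply Hd.
  - intros t0 _. apply (continuity_2d_pt_ext ft). intros; symmetry; apply E. apply Hft.
  - apply filter_forall. intros y. auto.
Qed.

Lemma int_cont1_gen G a b p1 p2 : C3 G ->
  continuous (fun q1 => RInt (fun y => G q1 p2 y) a b) p1.
Proof.
  intros HG. destruct (Rle_dec a b). apply int_cont1; auto.
  assert (E : (fun q1 => RInt (fun y => G q1 p2 y) a b) = (fun q1 => - RInt (fun y => G q1 p2 y) b a)).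
  { apply functional_extensionality; intros q1. symmetry.
    apply (opp_RInt_swap (V := R_CompleteNormedModule)). apply C3_exRInt; auto. }
  eapply continuous_ext. 2: exact (continuous_opp (K := R_AbsRing) (V := R_NormedModule) (fun q1 => RInt (fun y => G q1 p2 y) b a) p1
           (int_cont1 G b a p1 p2 ltac:(lra) HG)).
  intros q. simpl. change (- RInt (fun y => G q p2 y) b a = RInt (fun y => G q p2 y) a b).
  exact (f_equal (fun h => h q) (eq_sym E)).
Qed.

Lemma C3_perm_tyx G t : C3 G -> C3 (fun q1 q2 y => G t y q1).
Proof. intros HG. apply (C3_comp3 G (fun _ _ _ => t) (fun _ _ y => y) (fun q1 _ _ => q1)); auto.
  apply C3_const. apply C3_y. apply C3_t. Qed.
Lemma C3_perm_txy G t : C3 G -> C3 (fun q1 q2 y => G t q1 y).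
Proof. intros HG. apply (C3_comp3 G (fun _ _ _ => t) (fun q1 _ _ => q1) (fun _ _ y => y)); auto.
  apply C3_const. apply C3_t. apply C3_y. Qed.

Lemma fubini G t a b c d : C3 G ->
  RInt (fun x1 => RInt (fun x2 => G t x1 x2) c d) a b = RInt (fun x2 => RInt (fun x1 => G t x1 x2) a b) c d.
Proof.
  intros HG.
  set (g := fun z => RInt (fun x1 => G t x1 z) a b).
  assert (Hgc : forall z, continuous g z).
  { intros z. apply (int_cont1_gen (fun q1 q2 y => G t y q1) a b z 0). apply C3_perm_tyx; auto. }
  assert (Hex : forall x1 c' d', ex_RInt (fun x2 => G t x1 x2) c' d').
  { intros. apply C3_exRInt; auto. }
  assert (HP : forall z, is_derive (fun z => RInt (fun x1 => RInt (fun x2 => G t x1 x2) c z) a b) z (g z)).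
  { intros z. unfold g.
    apply (deriv_int_2d (fun s x1 => RInt (fun x2 => G t x1 x2) c s) (fun s x1 => G t x1 s) a b z).
    - intros u. apply (ex_RInt_continuous (V := R_CompleteNormedModule)). intros x1 _.
      apply (int_cont1_gen (fun q1 q2 y => G t q1 y) c u x1 0). apply C3_perm_txy; auto.
    - intros u v. apply (C3_2d_gen G (fun _ _ => t) (fun u v => v) (fun u v => u)); auto.
      apply continuity_2d_pt_const. apply continuity_2d_pt_id2. apply continuity_2d_pt_id1.
    - intros u v. apply (is_derive_RInt (fun x2 => G t v x2) (fun s => RInt (fun x2 => G t v x2) c s) c u).
      + apply filter_forall. intros b0. apply (RInt_correct (V := R_CompleteNormedModule)). apply Hex.
      + apply C3_slice_y; auto. }
  assert (HQ : forall z, is_derive (fun z => RInt g c z) z (g z)).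
  { intros z. apply (is_derive_RInt g (fun s => RInt g c s) c z).
    + apply filter_forall. intros b0. apply (RInt_correct (V := R_CompleteNormedModule)).
      apply (ex_RInt_continuous (V := R_CompleteNormedModule)). intros; apply Hgc.
    + apply Hgc. }
  assert (H0 : forall z, RInt (fun x1 => RInt (fun x2 => G t x1 x2) c z) a b - RInt g c z =
                         RInt (fun x1 => RInt (fun x2 => G t x1 x2) c c) a b - RInt g c c).
  { intros z. destruct (Rtotal_order c z) as [Hlt|[Heq|Hgt]].
    - symmetry. apply (eq_is_derive (fun z => RInt (fun x1 => RInt (fun x2 => G t x1 x2) c z) a b - RInt g c z) c z); auto.
      intros t0 _. change (@zero R_NormedModule) with 0. replace 0 with (g t0 - g t0) by ring.
      apply (is_derive_minus (K := R_AbsRing) (V := R_NormedModule)); auto.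
    - subst; reflexivity.
    - apply (eq_is_derive (fun z => RInt (fun x1 => RInt (fun x2 => G t x1 x2) c z) a b - RInt g c z) z c); auto.
      intros t0 _. change (@zero R_NormedModule) with 0. replace 0 with (g t0 - g t0) by ring.
      apply (is_derive_minus (K := R_AbsRing) (V := R_NormedModule)); auto. }
  specialize (H0 d).
  rewrite (RInt_point c g) in H0.
  rewrite (RInt_ext (fun x1 => RInt (fun x2 => G t x1 x2) c c) (fun _ => 0)) in H0.
  2:{ intros; apply (RInt_point (V := R_CompleteNormedModule)). }
  rewrite (RInt_const (V := R_CompleteNormedModule)) in H0.
  unfold g in H0. simpl in H0. unfold scal in H0; simpl in H0; unfold mult in H0; simpl in H0.
  change (@zero R_CompleteNormedModule) with 0 in H0. unfold g. lra.
Qed.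

Lemma exR (g : R -> R) a b : (forall z, continuous g z) -> ex_RInt g a b.
Proof. intros H. apply (ex_RInt_continuous (V := R_CompleteNormedModule)). intros; apply H. Qed.

Lemma int_zero_pos (g : R -> R) a b y : a < y < b -> (forall z, continuous g z) ->
  (forall z, a <= z <= b -> 0 <= g z) -> RInt g a b = 0 -> g y = 0.
Proof.
  intros Hy Hc Hp H0.
  destruct (Rle_lt_or_eq_dec 0 (g y)) as [Hlt|]; [apply Hp; lra| |auto].
  exfalso.
  destruct (cont_eps_inv g y (Hc y) (g y / 2)) as [d [Hd Hdd]]; [lra|].
  set (r := Rmin d (Rmin (y - a) (b - y)) / 2).
  assert (Hr : 0 < r).
  { unfold r. apply Rdiv_lt_0_compat; [|lra]. apply Rmin_glb_lt; auto. apply Rmin_glb_lt; lra. }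
  assert (Hr1 : r < d). { unfold r. assert (Rmin d (Rmin (y - a) (b - y)) <= d) by apply Rmin_l. lra. }
  assert (Hr2 : r < y - a /\ r < b - y).
  { unfold r. assert (Rmin d (Rmin (y - a) (b - y)) <= Rmin (y - a) (b - y)) by apply Rmin_r.
    assert (Rmin (y - a) (b - y) <= y - a) by apply Rmin_l. assert (Rmin (y - a) (b - y) <= b - y) by apply Rmin_r.
    split; lra. }
  assert (E : RInt g a b = RInt g a (y - r) + (RInt g (y - r) (y + r) + RInt g (y + r) b)).
  { rewrite <- (RInt_Chasles g a (y - r) b); try apply exR; auto.
    rewrite <- (RInt_Chasles g (y - r) (y + r) b); try apply exR; auto. }
  assert (E1 : 0 <= RInt g a (y - r)).
  { apply RInt_ge_0. lra. apply exR; auto. intros; apply Hp; lra. }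
  assert (E3 : 0 <= RInt g (y + r) b).
  { apply RInt_ge_0. lra. apply exR; auto. intros; apply Hp; lra. }
  assert (E2 : RInt (fun _ => g y / 2) (y - r) (y + r) <= RInt g (y - r) (y + r)).
  { apply RInt_le. lra. apply exR; intros; apply continuous_const. apply exR; auto.
    intros z Hz. assert (Rabs (g z - g y) < g y / 2) by (apply Hdd; apply Rabs_def1; lra).
    apply Rabs_def2 in H. lra. }
  rewrite (RInt_const (V := R_CompleteNormedModule)) in E2.
  change (scal (y + r - (y - r)) (g y / 2)) with ((y + r - (y - r)) * (g y / 2)) in E2.
  assert (0 < (y + r - (y - r)) * (g y / 2)) by (apply Rmult_lt_0_compat; lra).
  lra.
Qed.

Lemma cont_pos z : continuous (fun w => Rmax 0 w) z.
Proof.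
  apply cont_eps. intros eps He. exists eps. split; auto. intros y Hy.
  apply Rabs_def2 in Hy. apply Rabs_def1; unfold Rmax; repeat destruct Rle_dec; lra.
Qed.

Lemma is_derive_possq w : is_derive (fun z => (Rmax 0 z)^2) w (2 * Rmax 0 w).
Proof.
  destruct (Rtotal_order w 0) as [Hn|[H0|Hp]].
  - rewrite Rmax_left by lra.
    apply (is_derive_ext_loc (fun _ => 0)).
    + exists (mkposreal (- w) ltac:(lra)). intros y Hy. apply ball_R in Hy. apply Rabs_def2 in Hy. simpl in Hy. unfold minus, plus, opp in Hy; simpl in Hy.
      rewrite Rmax_left by lra. change (0 = 0 ^ 2 :> R). ring.
    + replace (2 * 0) with 0 by ring. apply (is_derive_const (K := R_AbsRing) (V := R_NormedModule)).
  - subst. rewrite Rmax_left by lra. apply is_derive_Reals. intros eps He.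
    exists (mkposreal eps He). intros h Hh0 Hh. rewrite Rplus_0_l, (Rmax_left 0 0) by lra.
    unfold Rmax; destruct Rle_dec.
    + replace ((h ^ 2 - 0 ^ 2) / h - 2 * 0) with h by (field; auto). exact Hh.
    + replace ((0 ^ 2 - 0 ^ 2) / h - 2 * 0) with 0 by (field; auto). rewrite Rabs_R0; auto.
  - rewrite Rmax_right by lra.
    apply (is_derive_ext_loc (fun z => z ^ 2)).
    + exists (mkposreal w ltac:(lra)). intros y Hy. apply ball_R in Hy. apply Rabs_def2 in Hy. simpl in Hy. unfold minus, plus, opp in Hy; simpl in Hy.
      rewrite Rmax_right by lra. change (y ^ 2 = y ^ 2 :> R). reflexivity.
    + replace (2 * w) with (INR 2 * 1 * w ^ (pred 2)) by (simpl; ring).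
      apply (is_derive_pow (fun z => z) 2 w 1).
      apply (is_derive_id (K := R_AbsRing)).
Qed.

Lemma half_derive (f g : R -> R) t0 : (forall s, t0 <= s -> f s = g s) ->
  ex_derive f t0 -> ex_derive g t0 -> Derive f t0 = Derive g t0.
Proof.
  intros H Hf Hg.
  apply Derive_correct in Hf, Hg. apply is_derive_Reals in Hf, Hg.
  set (lf := Derive f t0) in *. set (lg := Derive g t0) in *.
  destruct (Req_dec lf lg) as [|Hne]; auto. exfalso.
  set (e := Rabs (lf - lg) / 2).
  assert (He : 0 < e). { unfold e. apply Rdiv_lt_0_compat; [apply Rabs_pos_lt; lra| lra]. }
  destruct (Hf e He) as [df Hdf]. destruct (Hg e He) as [dg Hdg].
  set (h := Rmin df dg / 2).
  assert (Hh : 0 < h). { unfold h. apply Rdiv_lt_0_compat; [apply Rmin_glb_lt; apply cond_pos| lra]. }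
  assert (Hh1 : h < df /\ h < dg).
  { unfold h. assert (Rmin df dg <= df) by apply Rmin_l. assert (Rmin df dg <= dg) by apply Rmin_r.
    assert (0 < df) by apply cond_pos. assert (0 < dg) by apply cond_pos. split; lra. }
  assert (A := Hdf h ltac:(lra) ltac:(rewrite Rabs_right; lra)).
  assert (B := Hdg h ltac:(lra) ltac:(rewrite Rabs_right; lra)).
  rewrite (H (t0 + h)), (H t0) in A by lra.
  set (q := (g (t0 + h) - g t0) / h) in *.
  assert (Rabs (lf - lg) <= Rabs (q - lg) + Rabs (q - lf)).
  { replace (lf - lg) with ((q - lg) - (q - lf)) by ring.
    eapply Rle_trans. apply Rabs_triang. rewrite Rabs_Ropp. lra. }
  unfold e in *. lra.
Qed.

Definition ps (M z : R) := (Rmax 0 (M - z)) ^ 2.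
Definition dps (M z : R) := -2 * Rmax 0 (M - z).
Definition sg (L y : R) := y * y / (2 * L).
Definition dsg (L y : R) := y / L.

Lemma cont_ps M z : continuous (ps M) z.
Proof.
  apply (continuous_comp (fun z => M - z) (fun w => Rmax 0 w ^ 2)).
  - apply (continuous_minus (V := R_NormedModule) (fun _ => M) (fun z => z)). apply continuous_const. apply continuous_id.
  - apply (ex_derive_continuous (fun w => Rmax 0 w ^ 2)). eexists; apply is_derive_possq.
Qed.
Lemma cont_dps M z : continuous (dps M) z.
Proof.
  apply (continuous_comp (fun z => Rmax 0 (M - z)) (fun w => -2 * w)).
  - apply (continuous_comp (fun z => M - z) (fun w => Rmax 0 w)).
    apply (continuous_minus (V := R_NormedModule) (fun _ => M) (fun z => z)). apply continuous_const. apply continuous_id.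
    apply cont_pos.
  - apply (continuous_scal_r (K := R_AbsRing) (V := R_NormedModule) (-2) (fun w => w)). apply continuous_id.
Qed.

Lemma isd_eq (f : R -> R) x (l l' : R) : is_derive f x l -> l = l' -> is_derive f x l'.
Proof. intros H ->; exact H. Qed.
Ltac scalc := unfold scal, mult, plus, opp, minus; simpl; unfold mult; simpl.

Lemma isd_mult (f g : R -> R) x df dg : is_derive f x df -> is_derive g x dg ->
  is_derive (fun s => f s * g s) x (df * g x + f x * dg).
Proof. intros Hf Hg. eapply isd_eq. apply (is_derive_mult f g x df dg Hf Hg).
  intros; apply Rmult_comm. scalc. ring. Qed.
Lemma isd_plus (f g : R -> R) x df dg : is_derive f x df -> is_derive g x dg ->
  is_derive (fun s => f s + g s) x (df + dg).
Proof. intros Hf Hg. apply (is_derive_plus (K := R_AbsRing) (V := R_NormedModule) f g x df dg Hf Hg). Qed.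
Lemma isd_minus (f g : R -> R) x df dg : is_derive f x df -> is_derive g x dg ->
  is_derive (fun s => f s - g s) x (df - dg).
Proof. intros Hf Hg. apply (is_derive_minus (K := R_AbsRing) (V := R_NormedModule) f g x df dg Hf Hg). Qed.
Lemma isd_const c x : is_derive (fun _ : R => c) x 0.
Proof. apply (is_derive_const (K := R_AbsRing) (V := R_NormedModule)). Qed.
Lemma isd_id x : is_derive (fun s : R => s) x 1.
Proof. apply (is_derive_id (K := R_AbsRing)). Qed.
Lemma isd_scal c (f : R -> R) x df : is_derive f x df -> is_derive (fun s => c * f s) x (c * df).
Proof. intros H. eapply isd_eq. apply (is_derive_scal f x c df H). scalc. ring. Qed.

Lemma isd_ps M (g : R -> R) s dg : is_derive g s dg -> is_derive (fun s => ps M (g s)) s (dps M (g s) * dg).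
Proof.
  intros Hg. unfold ps, dps.
  eapply isd_eq. apply (is_derive_comp (fun w => Rmax 0 w ^ 2) (fun s => M - g s) s).
  - apply is_derive_possq.
  - apply isd_minus. apply isd_const. exact Hg.
  - scalc. ring.
Qed.

Lemma isd_sg L c s : L <> 0 -> is_derive (fun s => sg L (s - c)) s (dsg L (s - c)).
Proof. intros HL. unfold sg, dsg. auto_derive. auto. field. auto. Qed.

Lemma C3_div_c f c : C3 f -> C3 (fun t x y => f t x y / c).
Proof. intros H. unfold Rdiv. apply (C3_mult f (fun _ _ _ => / c)); auto. apply C3_const. Qed.

Ltac c3 := repeat (cbv beta; match goal with
 | |- C3 (fun t x y => @?f t x y + @?g t x y) => apply (C3_plus f g)
 | |- C3 (fun t x y => @?f t x y - @?g t x y) => apply (C3_minus f g)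
 | |- C3 (fun t x y => @?f t x y * @?g t x y) => apply (C3_mult f g)
 | |- C3 (fun t x y => @?f t x y / ?c) => apply (C3_div_c f c)
 | |- C3 (fun t x y => - @?f t x y) => apply (C3_opp f)
 | |- C3 (fun t x y => ps ?M (@?e t x y)) => apply (C3_comp (ps M) e (cont_ps M))
 | |- C3 (fun t x y => dps ?M (@?e t x y)) => apply (C3_comp (dps M) e (cont_dps M))
 | |- C3 (fun t x y => sg ?L (@?e t x y)) => unfold sg
 | |- C3 (fun t x y => dsg ?L (@?e t x y)) => unfold dsg
 | |- C3 (fun t x y => pdR ?d ?f t x y) => apply (smooth_C3 (pdR d f)); repeat apply smooth_pd; assumption
 | |- C3 (pdR ?d ?f) => apply (smooth_C3 (pdR d f)); repeat apply smooth_pd; assumption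
 | |- C3 (fun t x y => ?f t x y) => apply (smooth_C3 f); assumption
 | |- C3 (fun t _ _ => t) => apply C3_t
 | |- C3 (fun _ x _ => x) => apply C3_x
 | |- C3 (fun _ _ y => y) => apply C3_y
 | |- C3 (fun _ _ _ => _) => apply C3_const
 end).

Section Energy.
Variable u : fld R.
Variables M a b : R.
Hypothesis Hu : smoothR u.
Hypothesis HM : 0 < M.

Let L := 2 * M.
Definition z1 t x1 := t + sg (2 * M) (x1 - a).
Definition z2 t x2 := t + sg (2 * M) (x2 - b).
Definition phi t x1 x2 := ps M (z1 t x1) * ps M (z2 t x2).
Definition phit t x1 x2 := dps M (z1 t x1) * ps M (z2 t x2) + ps M (z1 t x1) * dps M (z2 t x2).
Definition phi1 t x1 x2 := dps M (z1 t x1) * dsg (2 * M) (x1 - a) * ps M (z2 t x2).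
Definition phi2 t x1 x2 := ps M (z1 t x1) * (dps M (z2 t x2) * dsg (2 * M) (x2 - b)).

Lemma C3_phi : C3 phi.
Proof. unfold phi, z1, z2. c3. Qed.
Lemma C3_phit : C3 phit.
Proof. unfold phit, z1, z2. c3. Qed.
Lemma C3_phi1 : C3 phi1.
Proof. unfold phi1, z1, z2. c3. Qed.
Lemma C3_phi2 : C3 phi2.
Proof. unfold phi2, z1, z2. c3. Qed.

Lemma d_phi_t t x1 x2 : is_derive (fun s => phi s x1 x2) t (phit t x1 x2).
Proof.
  unfold phi, phit, z1, z2. eapply isd_eq. apply isd_mult.
  apply (isd_ps M (fun s => s + sg (2 * M) (x1 - a))). apply isd_plus. apply isd_id. apply isd_const.
  apply (isd_ps M (fun s => s + sg (2 * M) (x2 - b))). apply isd_plus. apply isd_id. apply isd_const.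
  cbv beta; ring.
Qed.
Lemma d_phi_1 t x1 x2 : is_derive (fun s => phi t s x2) x1 (phi1 t x1 x2).
Proof.
  unfold phi, phi1, z1, z2. eapply isd_eq. apply isd_mult.
  apply (isd_ps M (fun s => t + sg (2 * M) (s - a))). apply isd_plus. apply isd_const. apply isd_sg. lra.
  apply isd_const.
  cbv beta; ring.
Qed.
Lemma d_phi_2 t x1 x2 : is_derive (fun s => phi t x1 s) x2 (phi2 t x1 x2).
Proof.
  unfold phi, phi2, z1, z2. eapply isd_eq. apply isd_mult.
  apply isd_const.
  apply (isd_ps M (fun s => t + sg (2 * M) (s - b))). apply isd_plus. apply isd_const. apply isd_sg. lra.
  cbv beta; ring.
Qed.


Definition ut := pdR Dt u.
Definition u1 := pdR D1 u.
Definition u2 := pdR D2 u.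
Definition en t x y := / 2 * (ut t x y * ut t x y + u1 t x y * u1 t x y + u2 t x y * u2 t x y).
Definition W t x y := en t x y * phi t x y.
Definition Wt t x y := (ut t x y * pdR Dt ut t x y + u1 t x y * pdR Dt u1 t x y + u2 t x y * pdR Dt u2 t x y) * phi t x y
   + en t x y * phit t x y.
Definition A1 t x y := ut t x y * u1 t x y * phi t x y.
Definition A1x t x y := (pdR D1 ut t x y * u1 t x y + ut t x y * pdR D1 u1 t x y) * phi t x y + ut t x y * u1 t x y * phi1 t x y.
Definition A2 t x y := ut t x y * u2 t x y * phi t x y.
Definition A2x t x y := (pdR D2 ut t x y * u2 t x y + ut t x y * pdR D2 u2 t x y) * phi t x y + ut t x y * u2 t x y * phi2 t x y.
Definition NN t x y := en t x y * phit t x y - ut t x y * u1 t x y * phi1 t x y - ut t x y * u2 t x y * phi2 t x y.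

Lemma isd_pdt f t x y : smoothR f -> is_derive (fun s => f s x y) t (pdR Dt f t x y).
Proof. intros H. apply (Derive_correct (fun s => f s x y)). exact (smooth_ex f Dt t x y H). Qed.
Lemma isd_pd1 f t x y : smoothR f -> is_derive (fun s => f t s y) x (pdR D1 f t x y).
Proof. intros H. apply (Derive_correct (fun s => f t s y)). exact (smooth_ex f D1 t x y H). Qed.
Lemma isd_pd2 f t x y : smoothR f -> is_derive (fun s => f t x s) y (pdR D2 f t x y).
Proof. intros H. apply (Derive_correct (fun s => f t x s)). exact (smooth_ex f D2 t x y H). Qed.

Lemma sm_ut : smoothR ut. Proof. apply smooth_pd; auto. Qed.
Lemma sm_u1 : smoothR u1. Proof. apply smooth_pd; auto. Qed.
Lemma sm_u2 : smoothR u2. Proof. apply smooth_pd; auto. Qed.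
Hint Resolve sm_ut sm_u1 sm_u2 : core.

Lemma d_W t x1 x2 : is_derive (fun s => W s x1 x2) t (Wt t x1 x2).
Proof.
  unfold W, Wt, en. eapply isd_eq. apply isd_mult. apply isd_scal.
  apply isd_plus. apply isd_plus.
  apply isd_mult; apply isd_pdt; auto. apply isd_mult; apply isd_pdt; auto. apply isd_mult; apply isd_pdt; auto.
  apply d_phi_t. cbv beta. field.
Qed.
Lemma d_A1 t x1 x2 : is_derive (fun s => A1 t s x2) x1 (A1x t x1 x2).
Proof.
  unfold A1, A1x. eapply isd_eq. apply isd_mult. apply isd_mult; apply isd_pd1; auto.
  apply d_phi_1. cbv beta; ring.
Qed.
Lemma d_A2 t x1 x2 : is_derive (fun s => A2 t x1 s) x2 (A2x t x1 x2).
Proof.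
  unfold A2, A2x. eapply isd_eq. apply isd_mult. apply isd_mult; apply isd_pd2; auto.
  apply d_phi_2. cbv beta; ring.
Qed.

Lemma W_ident t x y : boxR u t x y = 0 -> Wt t x y = A1x t x y + A2x t x y + NN t x y.
Proof.
  intros Hb. cbv beta iota delta [boxR sumR eta] in Hb.
  unfold Wt, A1x, A2x, NN, ut, u1, u2.
  rewrite (schwarz u Dt D1), (schwarz u Dt D2) by auto.
  replace (pdR Dt (pdR Dt u) t x y) with (pdR D1 (pdR D1 u) t x y + pdR D2 (pdR D2 u) t x y) by lra.
  ring.
Qed.

Lemma C3s : C3 ut /\ C3 u1 /\ C3 u2.
Proof. repeat split; apply smooth_C3; auto. Qed.

Lemma C3_W : C3 W. Proof. destruct C3s as (?&?&?). unfold W, en. c3; auto. apply C3_phi. Qed.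
Lemma C3_Wt : C3 Wt. Proof. destruct C3s as (?&?&?). unfold Wt, en. c3; auto; try apply C3_phi; try apply C3_phit. Qed.
Lemma C3_A1x : C3 A1x. Proof. destruct C3s as (?&?&?). unfold A1x. c3; auto; try apply C3_phi; try apply C3_phi1. Qed.
Lemma C3_A2x : C3 A2x. Proof. destruct C3s as (?&?&?). unfold A2x. c3; auto; try apply C3_phi; try apply C3_phi2. Qed.
Lemma C3_NN : C3 NN. Proof. destruct C3s as (?&?&?). unfold NN, en. c3; auto; try apply C3_phit; try apply C3_phi1; try apply C3_phi2. Qed.
Lemma C3_A1 : C3 A1. Proof. destruct C3s as (?&?&?). unfold A1. c3; auto; apply C3_phi. Qed.
Lemma C3_A2 : C3 A2. Proof. destruct C3s as (?&?&?). unfold A2. c3; auto; apply C3_phi. Qed.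


Lemma ps_nonneg z : 0 <= ps M z.
Proof. unfold ps. apply pow2_ge_0. Qed.

Lemma key_T (t y : R) : 0 <= t -> dps M (t + sg (2 * M) y) <= - Rabs (dps M (t + sg (2 * M) y) * dsg (2 * M) y).
Proof.
  intros Ht. unfold dps, sg, dsg.
  unfold Rmax at 1 2. destruct Rle_dec as [Hle|Hnle]; cycle 1.
  - rewrite Rmult_0_r, Rmult_0_l, Rabs_R0. lra.
  - destruct Hle as [Hpos|Heq]; [| rewrite <- Heq; rewrite Rmult_0_r, Rmult_0_l, Rabs_R0; lra].
    assert (Hy2 : y * y < (2 * M) * (2 * M)).
    { assert (y * y / (2 * (2 * M)) < M) by lra.
      apply (Rmult_lt_compat_r (2 * (2 * M))) in H; [|lra].
      unfold Rdiv in H. rewrite Rmult_assoc, Rinv_l in H by lra. lra. }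
    assert (Hay : Rabs y < 2 * M).
    { unfold Rabs; destruct Rcase_abs; nra. }
    rewrite Rabs_mult, Rabs_mult. unfold Rdiv. rewrite Rabs_mult.
    rewrite (Rabs_left (-2)) by lra.
    rewrite (Rabs_right (M - (t + y * y * / (2 * (2 * M))))) by (unfold Rdiv in Hpos; lra).
    rewrite (Rabs_right (/ (2 * M))) by (left; apply Rinv_0_lt_compat; lra).
    assert (Rabs y * / (2 * M) <= 1).
    { apply (Rmult_le_reg_r (2 * M)); [lra|]. rewrite Rmult_assoc, Rinv_l by lra. lra. }
    unfold Rdiv in Hpos. nra.
Qed.

Lemma bracket e w p q T X P : 0 <= P -> T <= - Rabs X -> e = / 2 * (w * w + p * p + q * q) ->
  P * (e * T - w * p * X) <= 0.
Proof.
  intros HP HT He.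
  assert (He0 : 0 <= e) by (rewrite He; nra).
  assert (Hwp : Rabs (w * p) <= e).
  { rewrite He. assert (0 <= (w - p) * (w - p)) by apply Rle_0_sqr.
    assert (0 <= (w + p) * (w + p)) by apply Rle_0_sqr. assert (0 <= q * q) by apply Rle_0_sqr.
    unfold Rabs at 1; destruct Rcase_abs; lra. }
  assert (e * T - w * p * X <= 0).
  { assert (- (w * p * X) <= Rabs (w * p) * Rabs X).
    { rewrite <- Rabs_mult. rewrite <- Rabs_Ropp. apply Rle_abs. }
    assert (e * T <= - e * Rabs X) by nra.
    assert (Rabs (w * p) * Rabs X <= e * Rabs X) by (apply Rmult_le_compat_r; auto; apply Rabs_pos).
    lra. }
  nra.
Qed.

Lemma NN_le t x y : 0 <= t -> NN t x y <= 0.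
Proof.
  intros Ht.
  assert (E : NN t x y = ps M (z2 t y) * (en t x y * dps M (z1 t x) - ut t x y * u1 t x y * (dps M (z1 t x) * dsg (2 * M) (x - a)))
                       + ps M (z1 t x) * (en t x y * dps M (z2 t y) - ut t x y * u2 t x y * (dps M (z2 t y) * dsg (2 * M) (y - b)))).
  { unfold NN, phit, phi1, phi2. ring. }
  rewrite E.
  assert (H1 := bracket (en t x y) (ut t x y) (u1 t x y) (u2 t x y) (dps M (z1 t x)) (dps M (z1 t x) * dsg (2 * M) (x - a)) (ps M (z2 t y))
     (ps_nonneg _) (key_T t (x - a) Ht) ltac:(unfold en; ring)).
  assert (H2 := bracket (en t x y) (ut t x y) (u2 t x y) (u1 t x y) (dps M (z2 t y)) (dps M (z2 t y) * dsg (2 * M) (y - b)) (ps M (z1 t x))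
     (ps_nonneg _) (key_T t (y - b) Ht) ltac:(unfold en; ring)).
  lra.
Qed.

Lemma ps_edge t c : 0 <= t -> (c = 2 * M \/ c = - (2 * M)) -> ps M (t + sg (2 * M) c) = 0.
Proof.
  intros Ht Hc. unfold ps, sg.
  replace (c * c / (2 * (2 * M))) with M by (destruct Hc as [->| ->]; field; lra).
  rewrite Rmax_left by lra. ring.
Qed.

Lemma A1_edge t x2 c : 0 <= t -> (c = a + 2 * M \/ c = a - 2 * M) -> A1 t c x2 = 0.
Proof.
  intros Ht Hc. unfold A1, phi, z1. rewrite (ps_edge t (c - a)); [ring|auto|lra].
Qed.
Lemma A2_edge t x1 c : 0 <= t -> (c = b + 2 * M \/ c = b - 2 * M) -> A2 t x1 c = 0.
Proof.
  intros Ht Hc. unfold A2, phi, z2. rewrite (ps_edge t (c - b)); [ring|auto|lra].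
Qed.


Definition EE t := RInt (fun x1 => RInt (fun x2 => W t x1 x2) (b - 2 * M) (b + 2 * M)) (a - 2 * M) (a + 2 * M).
Definition EEt t := RInt (fun x1 => RInt (fun x2 => Wt t x1 x2) (b - 2 * M) (b + 2 * M)) (a - 2 * M) (a + 2 * M).

Lemma C3_swap12 G : C3 G -> C3 (fun q1 q2 y => G q2 q1 y).
Proof. intros HG. apply (C3_comp3 G (fun _ x _ => x) (fun t _ _ => t) (fun _ _ y => y)); auto.
  apply C3_x. apply C3_t. apply C3_y. Qed.

Lemma cont_inner G t x1 c d : C3 G -> continuous (fun x1 => RInt (fun x2 => G t x1 x2) c d) x1.
Proof. intros HG. apply (int_cont1_gen (fun q1 q2 y => G q2 q1 y) c d x1 t). apply C3_swap12; auto. Qed.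

Lemma ex_inner G t c d a' b' : C3 G -> ex_RInt (fun x1 => RInt (fun x2 => G t x1 x2) c d) a' b'.
Proof. intros HG. apply exR. intros z. apply cont_inner; auto. Qed.

Lemma d_EE t : is_derive EE t (EEt t).
Proof.
  unfold EE, EEt.
  apply (deriv_int_2d (fun s x1 => RInt (fun x2 => W s x1 x2) (b - 2 * M) (b + 2 * M))
                      (fun s x1 => RInt (fun x2 => Wt s x1 x2) (b - 2 * M) (b + 2 * M))).
  - intros s. apply ex_inner. apply C3_W.
  - intros s v. apply (int_cont2 Wt). lra. apply C3_Wt.
  - intros s v. apply (deriv_int_2d (fun s x2 => W s v x2) (fun s x2 => Wt s v x2)).
    + intros; apply C3_exRInt; apply C3_W.
    + intros; apply C3_2d_ty; apply C3_Wt.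
    + intros; apply d_W.
Qed.

Lemma RInt_zero_fun (c d : R) : RInt (fun _ => 0) c d = 0.
Proof. rewrite (RInt_const (V := R_CompleteNormedModule)). change ((d - c) * 0 = 0 :> R). ring. Qed.

Lemma EEt_le t : 0 <= t -> (forall x y, boxR u t x y = 0) -> EEt t <= 0.
Proof.
  intros Ht Hbox. unfold EEt.
  set (J := b - 2 * M). set (J' := b + 2 * M). set (I := a - 2 * M). set (I' := a + 2 * M).
  assert (Step1 : forall x1, RInt (fun x2 => Wt t x1 x2) J J' =
      RInt (fun x2 => A1x t x1 x2) J J' + RInt (fun x2 => NN t x1 x2) J J').
  { intros x1.
    rewrite (RInt_ext (fun x2 => Wt t x1 x2) (fun x2 => (A1x t x1 x2 + A2x t x1 x2) + NN t x1 x2)).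
    2:{ intros; apply W_ident; auto. }
    rewrite (RInt_plus (V := R_CompleteNormedModule) (fun x2 => A1x t x1 x2 + A2x t x1 x2) (fun x2 => NN t x1 x2)).
    2:{ apply (ex_RInt_plus (V := R_CompleteNormedModule)); apply C3_exRInt; [apply C3_A1x|apply C3_A2x]. }
    2:{ apply C3_exRInt; apply C3_NN. }
    rewrite (RInt_plus (V := R_CompleteNormedModule) (fun x2 => A1x t x1 x2) (fun x2 => A2x t x1 x2)).
    2:{ apply C3_exRInt; apply C3_A1x. }
    2:{ apply C3_exRInt; apply C3_A2x. }
    assert (Z : RInt (fun x2 => A2x t x1 x2) J J' = 0).
    { apply is_RInt_unique. replace 0 with (minus (A2 t x1 J') (A2 t x1 J)).
      apply (is_RInt_derive (V := R_CompleteNormedModule) (fun x2 => A2 t x1 x2)).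
      - intros; apply d_A2.
      - intros; apply C3_slice_y; apply C3_A2x.
      - rewrite (A2_edge t x1 J'), (A2_edge t x1 J); unfold J, J'; auto; try lra.
        exact (Rminus_diag_eq 0 0 eq_refl). }
    change (plus (plus (RInt (fun x2 => A1x t x1 x2) J J') (RInt (fun x2 => A2x t x1 x2) J J')) (RInt (fun x2 => NN t x1 x2) J J')
      = RInt (fun x2 => A1x t x1 x2) J J' + RInt (fun x2 => NN t x1 x2) J J').
    change (plus (plus ?A ?B) ?C) with (A + B + C). rewrite Z. match goal with |- ?x = ?y => change (x = y :> R) end. ring. }
  rewrite (RInt_ext _ (fun x1 => RInt (fun x2 => A1x t x1 x2) J J' + RInt (fun x2 => NN t x1 x2) J J')).
  2:{ intros; apply Step1. }
  rewrite (RInt_plus (V := R_CompleteNormedModule) (fun x1 => RInt (fun x2 => A1x t x1 x2) J J') (fun x1 => RInt (fun x2 => NN t x1 x2) J J')).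
  2:{ apply ex_inner; apply C3_A1x. }
  2:{ apply ex_inner; apply C3_NN. }
  assert (Z1 : RInt (fun x1 => RInt (fun x2 => A1x t x1 x2) J J') I I' = 0).
  { rewrite fubini by apply C3_A1x.
    rewrite (RInt_ext _ (fun _ => 0)). apply RInt_zero_fun.
    intros x2 _. apply is_RInt_unique. replace 0 with (minus (A1 t I' x2) (A1 t I x2)).
    apply (is_RInt_derive (V := R_CompleteNormedModule) (fun x1 => A1 t x1 x2)).
    - intros; apply d_A1.
    - intros; apply C3_slice_x; apply C3_A1x.
    - rewrite (A1_edge t x2 I'), (A1_edge t x2 I); unfold I, I'; auto; try lra.
      exact (Rminus_diag_eq 0 0 eq_refl). }
  assert (Z2 : RInt (fun x1 => RInt (fun x2 => NN t x1 x2) J J') I I' <= 0).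
  { rewrite <- (RInt_zero_fun I I'). apply RInt_le. unfold I, I'; lra.
    apply ex_inner; apply C3_NN. apply exR; intros; apply continuous_const.
    intros x1 _. rewrite <- (RInt_zero_fun J J'). apply RInt_le. unfold J, J'; lra.
    apply C3_exRInt; apply C3_NN. apply exR; intros; apply continuous_const.
    intros x2 _. apply NN_le; auto. }
  change (plus ?A ?B) with (A + B). lra.
Qed.


Lemma en_nonneg t x y : 0 <= en t x y.
Proof. unfold en. assert (0 <= ut t x y * ut t x y) by apply Rle_0_sqr.
  assert (0 <= u1 t x y * u1 t x y) by apply Rle_0_sqr. assert (0 <= u2 t x y * u2 t x y) by apply Rle_0_sqr.
  lra. Qed.
Lemma W_nonneg t x y : 0 <= W t x y.
Proof. unfold W, phi. apply Rmult_le_pos. apply en_nonneg. apply Rmult_le_pos; apply ps_nonneg. Qed.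

Lemma inner_nonneg t x1 : 0 <= RInt (fun x2 => W t x1 x2) (b - 2 * M) (b + 2 * M).
Proof. apply RInt_ge_0. lra. apply C3_exRInt; apply C3_W. intros; apply W_nonneg. Qed.
Lemma EE_nonneg t : 0 <= EE t.
Proof. unfold EE. apply RInt_ge_0. lra. apply ex_inner; apply C3_W. intros; apply inner_nonneg. Qed.

Hypothesis Hu0 : forall x y, u 0 x y = 0.
Hypothesis Hut0 : forall x y, pdR Dt u 0 x y = 0.
Hypothesis Hbox : forall t x y, 0 <= t -> boxR u t x y = 0.

Lemma EE0 : EE 0 = 0.
Proof.
  unfold EE. rewrite (RInt_ext _ (fun _ => 0)). apply RInt_zero_fun.
  intros x1 _. rewrite (RInt_ext _ (fun _ => 0)). apply RInt_zero_fun.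
  intros x2 _. unfold W, en.
  assert (H1 : u1 0 x1 x2 = 0).
  { unfold u1. change (Derive (fun s => u 0 s x2) x1 = 0).
    rewrite (Derive_ext (fun s => u 0 s x2) (fun _ => 0)). apply Derive_const. intros; apply Hu0. }
  assert (H2 : u2 0 x1 x2 = 0).
  { unfold u2. change (Derive (fun s => u 0 x1 s) x2 = 0).
    rewrite (Derive_ext (fun s => u 0 x1 s) (fun _ => 0)). apply Derive_const. intros; apply Hu0. }
  unfold ut. rewrite Hut0. fold u1 u2. rewrite H1, H2. match goal with |- ?x = ?y => change (x = y :> R) end. ring.
Qed.

Lemma EE_zero t : 0 <= t -> EE t = 0.
Proof.
  intros Ht. destruct Ht as [Ht|<-]; [|apply EE0].
  assert (Hmvt := MVT_gen EE 0 t EEt).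
  rewrite Rmin_left, Rmax_right in Hmvt by lra.
  destruct Hmvt as [c [Hc Heq]].
  - intros; apply d_EE.
  - intros x _. apply continuity_pt_filterlim. apply (ex_derive_continuous EE). eexists; apply d_EE.
  - assert (EEt c <= 0). { apply EEt_le. lra. intros; apply Hbox; lra. }
    assert (EE 0 = 0) by apply EE0. assert (0 <= EE t) by apply EE_nonneg.
    assert (EEt c * (t - 0) <= 0) by (apply Rmult_le_0_r; lra).
    lra.
Qed.

Lemma ut_zero t : 0 <= t < M -> pdR Dt u t a b = 0.
Proof.
  intros Ht.
  assert (H1 : RInt (fun x2 => W t a x2) (b - 2 * M) (b + 2 * M) = 0).
  { apply (int_zero_pos (fun x1 => RInt (fun x2 => W t x1 x2) (b - 2 * M) (b + 2 * M)) (a - 2 * M) (a + 2 * M) a).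
    lra. intros; apply cont_inner; apply C3_W. intros; apply inner_nonneg. apply EE_zero; lra. }
  assert (H2 : W t a b = 0).
  { apply (int_zero_pos (fun x2 => W t a x2) (b - 2 * M) (b + 2 * M) b). lra.
    intros; apply C3_slice_y; apply C3_W. intros; apply W_nonneg. exact H1. }
  unfold W, phi, z1, z2 in H2. rewrite !Rminus_eq_0 in H2.
  assert (Hs : sg (2 * M) 0 = 0) by (unfold sg; field; lra). rewrite Hs, Rplus_0_r in H2.
  assert (Hp : 0 < ps M t).
  { unfold ps. rewrite Rmax_right by lra. apply pow_lt. lra. }
  assert (He : en t a b = 0).
  { apply Rmult_integral in H2. destruct H2 as [|H2]; auto. apply Rmult_integral in H2. lra. }
  unfold en in He. fold (ut t a b).
  assert (0 <= u1 t a b * u1 t a b) by apply Rle_0_sqr. assert (0 <= u2 t a b * u2 t a b) by apply Rle_0_sqr.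
  assert (Hs2 : ut t a b * ut t a b + u1 t a b * u1 t a b + u2 t a b * u2 t a b = 0).
  { apply (Rmult_eq_reg_l (/ 2)). rewrite Rmult_0_r. exact He. apply Rinv_neq_0_compat. lra. }
  assert (H3 : ut t a b * ut t a b = 0) by (assert (0 <= ut t a b * ut t a b) by apply Rle_0_sqr; lra).
  apply Rmult_integral in H3. tauto.
Qed.

End Energy.

Theorem wave_unique (u : fld R) : smoothR u ->
  (forall t x y, 0 <= t -> boxR u t x y = 0) -> (forall x y, u 0 x y = 0) ->
  (forall x y, pdR Dt u 0 x y = 0) -> forall t x y, 0 <= t -> u t x y = 0.
Proof.
  intros Hu Hbox Hu0 Hut0 T a b HT.
  destruct HT as [HT|<-]; [|apply Hu0].
  rewrite <- (Hu0 a b). symmetry.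
  apply (eq_is_derive (fun s => u s a b) 0 T); auto.
  intros s Hs. change (@zero R_NormedModule) with 0.
  assert (HZ := @ut_zero u (T + 1) a b Hu ltac:(lra) Hu0 Hut0 Hbox s ltac:(lra)).
  rewrite <- HZ.
  apply (isd_pdt u s a b Hu).
Qed.

Lemma spinor_eq (u w : spinor) :
  fst (fst u) = fst (fst w) -> snd (fst u) = snd (fst w) ->
  fst (snd u) = fst (snd w) -> snd (snd u) = snd (snd w) -> u = w.
Proof. destruct u as [[a b] [c d]], w as [[a' b'] [c' d']]; simpl; intros; subst; reflexivity. Qed.
Lemma C_eq (u w : C) : fst u = fst w -> snd u = snd w -> u = w.
Proof. destruct u, w; simpl; intros; subst; reflexivity. Qed.

Definition k1 (F : fld spinor) : fld R := fun t x y => fst (fst (F t x y)).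
Definition k2 (F : fld spinor) : fld R := fun t x y => snd (fst (F t x y)).
Definition k3 (F : fld spinor) : fld R := fun t x y => fst (snd (F t x y)).
Definition k4 (F : fld spinor) : fld R := fun t x y => snd (snd (F t x y)).
Definition r1 (G : fld C) : fld R := fun t x y => fst (G t x y).
Definition r2 (G : fld C) : fld R := fun t x y => snd (G t x y).

Ltac sy := cbn [sadd sscal ssub sopp mv mm madd mscal szero hdot fst snd
  Cplus Cmult Copp Cminus RtoC Ci Cconj gamma0 gamma1 gamma2 gam I2 m11 m12 m21 m22 half omgg minus_part eta] in *;
  unfold Re, Im in *.

Ltac fold_k := repeat match goal with
  | |- context [fst (fst (?G ?a ?b ?c))] => change (fst (fst (G a b c))) with (k1 G a b c)
  | |- context [snd (fst (?G ?a ?b ?c))] => change (snd (fst (G a b c))) with (k2 G a b c)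
  | |- context [fst (snd (?G ?a ?b ?c))] => change (fst (snd (G a b c))) with (k3 G a b c)
  | |- context [snd (snd (?G ?a ?b ?c))] => change (snd (snd (G a b c))) with (k4 G a b c)
  end.

Ltac rg := match goal with |- ?a = ?b => change (a = b :> R) end; first [ring | lra].

Ltac sm := repeat (cbv beta; match goal with
  | |- smoothR (fun t x y => @?f t x y + @?g t x y) => apply (smooth_plus f g)
  | |- smoothR (fun t x y => @?f t x y - @?g t x y) => apply (smooth_minus f g)
  | |- smoothR (fun t x y => @?f t x y * @?g t x y) => apply (smooth_mult f g)
  | |- smoothR (fun t x y => - @?f t x y) => apply (smooth_opp f)
  | |- smoothR (fun t x y => pdR ?d ?f t x y) => apply (smooth_pd f d)
  | |- smoothR (pdR ?d ?f) => apply (smooth_pd f d)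
  | |- smoothR (fun _ _ _ => ?c) => apply smooth_const
  | |- smoothR (fun t _ _ => t) => apply smooth_t
  | |- smoothR (fun _ x _ => x) => apply smooth_x
  | |- smoothR (fun _ _ y => y) => apply smooth_y
  | |- smoothR _ => assumption
  end).

Ltac pdx := repeat (cbv beta; match goal with
  | |- context [pdR ?d (fun t x y => @?f t x y + @?g t x y)] =>
      rewrite (pdR_plus d f g) by (apply smooth_exAll; sm)
  | |- context [pdR ?d (fun t x y => @?f t x y - @?g t x y)] =>
      rewrite (pdR_minus d f g) by (apply smooth_exAll; sm)
  | |- context [pdR ?d (fun t x y => @?f t x y * @?g t x y)] =>
      rewrite (pdR_mult d f g) by (apply smooth_exAll; sm)
  | |- context [pdR ?d (fun t x y => - @?f t x y)] =>
      rewrite (pdR_opp d f)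
  | |- context [pdR ?d (fun _ _ _ => ?c)] => rewrite (pdR_const d c)
  | |- context [pdR ?d (fun t _ _ => t)] => rewrite (pdR_t d)
  | |- context [pdR ?d (fun _ x _ => x)] => rewrite (pdR_x d)
  | |- context [pdR ?d (fun _ _ y => y)] => rewrite (pdR_y d)
  end).

Ltac etac := repeat match goal with |- context [fun t x y => ?g t x y] =>
  change (fun t x y => g t x y) with g end.

Ltac schw := etac; repeat first
  [ rewrite (schwarz _ D1 Dt) by sm
  | rewrite (schwarz _ D2 Dt) by sm
  | rewrite (schwarz _ D2 D1) by sm ].


Lemma k1_pd F d : k1 (pdS d F) = pdR d (k1 F). Proof. reflexivity. Qed.
Lemma k2_pd F d : k2 (pdS d F) = pdR d (k2 F). Proof. reflexivity. Qed.
Lemma k3_pd F d : k3 (pdS d F) = pdR d (k3 F). Proof. reflexivity. Qed.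
Lemma k4_pd F d : k4 (pdS d F) = pdR d (k4 F). Proof. reflexivity. Qed.
Section KL.
Variable F : fld spinor.
Variable v : fld R.

Ltac kpd := rewrite ?k1_pd, ?k2_pd, ?k3_pd, ?k4_pd.
Ltac klem := fext; lazymatch goal with |- ?K _ _ _ _ = _ => unfold K at 1 end;
  unfold dirac, boxS, rmulS, Omega_hat, L1_hat, L2_hat, sumS; sy; fold_k; kpd; rg.

Lemma k1_dirac : k1 (dirac F) = fun t x y => pdR Dt (k1 F) t x y + pdR D1 (k3 F) t x y + pdR D2 (k4 F) t x y.
Proof. klem. Qed.
Lemma k2_dirac : k2 (dirac F) = fun t x y => pdR Dt (k2 F) t x y + pdR D1 (k4 F) t x y - pdR D2 (k3 F) t x y.
Proof. klem. Qed.
Lemma k3_dirac : k3 (dirac F) = fun t x y => - pdR Dt (k3 F) t x y - pdR D1 (k1 F) t x y + pdR D2 (k2 F) t x y.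
Proof. klem. Qed.
Lemma k4_dirac : k4 (dirac F) = fun t x y => - pdR Dt (k4 F) t x y - pdR D1 (k2 F) t x y - pdR D2 (k1 F) t x y.
Proof. klem. Qed.

Lemma k1_box : k1 (boxS F) = fun t x y => - pdR Dt (pdR Dt (k1 F)) t x y + pdR D1 (pdR D1 (k1 F)) t x y + pdR D2 (pdR D2 (k1 F)) t x y.
Proof. klem. Qed.
Lemma k2_box : k2 (boxS F) = fun t x y => - pdR Dt (pdR Dt (k2 F)) t x y + pdR D1 (pdR D1 (k2 F)) t x y + pdR D2 (pdR D2 (k2 F)) t x y.
Proof. klem. Qed.
Lemma k3_box : k3 (boxS F) = fun t x y => - pdR Dt (pdR Dt (k3 F)) t x y + pdR D1 (pdR D1 (k3 F)) t x y + pdR D2 (pdR D2 (k3 F)) t x y.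
Proof. klem. Qed.
Lemma k4_box : k4 (boxS F) = fun t x y => - pdR Dt (pdR Dt (k4 F)) t x y + pdR D1 (pdR D1 (k4 F)) t x y + pdR D2 (pdR D2 (k4 F)) t x y.
Proof. klem. Qed.

Lemma k1_rmul : k1 (rmulS v F) = fun t x y => v t x y * k1 F t x y. Proof. klem. Qed.
Lemma k2_rmul : k2 (rmulS v F) = fun t x y => v t x y * k2 F t x y. Proof. klem. Qed.
Lemma k3_rmul : k3 (rmulS v F) = fun t x y => v t x y * k3 F t x y. Proof. klem. Qed.
Lemma k4_rmul : k4 (rmulS v F) = fun t x y => v t x y * k4 F t x y. Proof. klem. Qed.

Lemma k1_Om : k1 (Omega_hat F) = fun t x y => x * pdR D2 (k1 F) t x y - y * pdR D1 (k1 F) t x y - 1/2 * k2 F t x y.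
Proof. klem. Qed.
Lemma k2_Om : k2 (Omega_hat F) = fun t x y => x * pdR D2 (k2 F) t x y - y * pdR D1 (k2 F) t x y + 1/2 * k1 F t x y.
Proof. klem. Qed.
Lemma k3_Om : k3 (Omega_hat F) = fun t x y => x * pdR D2 (k3 F) t x y - y * pdR D1 (k3 F) t x y + 1/2 * k4 F t x y.
Proof. klem. Qed.
Lemma k4_Om : k4 (Omega_hat F) = fun t x y => x * pdR D2 (k4 F) t x y - y * pdR D1 (k4 F) t x y - 1/2 * k3 F t x y.
Proof. klem. Qed.

Lemma k1_L1 : k1 (L1_hat F) = fun t x y => t * pdR D1 (k1 F) t x y + x * pdR Dt (k1 F) t x y - 1/2 * k3 F t x y.
Proof. klem. Qed.
Lemma k2_L1 : k2 (L1_hat F) = fun t x y => t * pdR D1 (k2 F) t x y + x * pdR Dt (k2 F) t x y - 1/2 * k4 F t x y.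
Proof. klem. Qed.
Lemma k3_L1 : k3 (L1_hat F) = fun t x y => t * pdR D1 (k3 F) t x y + x * pdR Dt (k3 F) t x y - 1/2 * k1 F t x y.
Proof. klem. Qed.
Lemma k4_L1 : k4 (L1_hat F) = fun t x y => t * pdR D1 (k4 F) t x y + x * pdR Dt (k4 F) t x y - 1/2 * k2 F t x y.
Proof. klem. Qed.

Lemma k1_L2 : k1 (L2_hat F) = fun t x y => t * pdR D2 (k1 F) t x y + y * pdR Dt (k1 F) t x y - 1/2 * k4 F t x y.
Proof. klem. Qed.
Lemma k2_L2 : k2 (L2_hat F) = fun t x y => t * pdR D2 (k2 F) t x y + y * pdR Dt (k2 F) t x y + 1/2 * k3 F t x y.
Proof. klem. Qed.
Lemma k3_L2 : k3 (L2_hat F) = fun t x y => t * pdR D2 (k3 F) t x y + y * pdR Dt (k3 F) t x y + 1/2 * k2 F t x y.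
Proof. klem. Qed.
Lemma k4_L2 : k4 (L2_hat F) = fun t x y => t * pdR D2 (k4 F) t x y + y * pdR Dt (k4 F) t x y - 1/2 * k1 F t x y.
Proof. klem. Qed.
End KL.

Section KP.
Variables F G : fld spinor.
Variable c : C.
Lemma k1_sadd : k1 (fun t x y => sadd (F t x y) (G t x y)) = fun t x y => k1 F t x y + k1 G t x y. Proof. reflexivity. Qed.
Lemma k2_sadd : k2 (fun t x y => sadd (F t x y) (G t x y)) = fun t x y => k2 F t x y + k2 G t x y. Proof. reflexivity. Qed.
Lemma k3_sadd : k3 (fun t x y => sadd (F t x y) (G t x y)) = fun t x y => k3 F t x y + k3 G t x y. Proof. reflexivity. Qed.
Lemma k4_sadd : k4 (fun t x y => sadd (F t x y) (G t x y)) = fun t x y => k4 F t x y + k4 G t x y. Proof. reflexivity. Qed.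
Lemma k1_ssub : k1 (fun t x y => ssub (F t x y) (G t x y)) = fun t x y => k1 F t x y - k1 G t x y. Proof. reflexivity. Qed.
Lemma k2_ssub : k2 (fun t x y => ssub (F t x y) (G t x y)) = fun t x y => k2 F t x y - k2 G t x y. Proof. reflexivity. Qed.
Lemma k3_ssub : k3 (fun t x y => ssub (F t x y) (G t x y)) = fun t x y => k3 F t x y - k3 G t x y. Proof. reflexivity. Qed.
Lemma k4_ssub : k4 (fun t x y => ssub (F t x y) (G t x y)) = fun t x y => k4 F t x y - k4 G t x y. Proof. reflexivity. Qed.
Lemma k1_sopp : k1 (fun t x y => sopp (F t x y)) = fun t x y => - k1 F t x y. Proof. reflexivity. Qed.
Lemma k2_sopp : k2 (fun t x y => sopp (F t x y)) = fun t x y => - k2 F t x y. Proof. reflexivity. Qed.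
Lemma k3_sopp : k3 (fun t x y => sopp (F t x y)) = fun t x y => - k3 F t x y. Proof. reflexivity. Qed.
Lemma k4_sopp : k4 (fun t x y => sopp (F t x y)) = fun t x y => - k4 F t x y. Proof. reflexivity. Qed.
Lemma k1_sscal : k1 (fun t x y => sscal c (F t x y)) = fun t x y => fst c * k1 F t x y - snd c * k2 F t x y. Proof. reflexivity. Qed.
Lemma k2_sscal : k2 (fun t x y => sscal c (F t x y)) = fun t x y => fst c * k2 F t x y + snd c * k1 F t x y. Proof. reflexivity. Qed.
Lemma k3_sscal : k3 (fun t x y => sscal c (F t x y)) = fun t x y => fst c * k3 F t x y - snd c * k4 F t x y. Proof. reflexivity. Qed.
Lemma k4_sscal : k4 (fun t x y => sscal c (F t x y)) = fun t x y => fst c * k4 F t x y + snd c * k3 F t x y. Proof. reflexivity. Qed.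
End KP.

Lemma k1_mv0 F : k1 (fun t x y => mv gamma0 (F t x y)) = k1 F. Proof. fext. unfold k1. sy. rg. Qed.
Lemma k2_mv0 F : k2 (fun t x y => mv gamma0 (F t x y)) = k2 F. Proof. fext. unfold k2. sy. rg. Qed.
Lemma k3_mv0 F : k3 (fun t x y => mv gamma0 (F t x y)) = fun t x y => - k3 F t x y. Proof. fext. unfold k3. sy. rg. Qed.
Lemma k4_mv0 F : k4 (fun t x y => mv gamma0 (F t x y)) = fun t x y => - k4 F t x y. Proof. fext. unfold k4. sy. rg. Qed.

Ltac kx := repeat progress (rewrite ?k1_dirac, ?k2_dirac, ?k3_dirac, ?k4_dirac,
  ?k1_box, ?k2_box, ?k3_box, ?k4_box, ?k1_rmul, ?k2_rmul, ?k3_rmul, ?k4_rmul,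
  ?k1_Om, ?k2_Om, ?k3_Om, ?k4_Om, ?k1_L1, ?k2_L1, ?k3_L1, ?k4_L1,
  ?k1_L2, ?k2_L2, ?k3_L2, ?k4_L2, ?k1_pd, ?k2_pd, ?k3_pd, ?k4_pd,
  ?k1_sadd, ?k2_sadd, ?k3_sadd, ?k4_sadd, ?k1_ssub, ?k2_ssub, ?k3_ssub, ?k4_ssub,
  ?k1_sopp, ?k2_sopp, ?k3_sopp, ?k4_sopp, ?k1_sscal, ?k2_sscal, ?k3_sscal, ?k4_sscal,
  ?k1_mv0, ?k2_mv0, ?k3_mv0, ?k4_mv0).

Ltac gen := apply spinor_eq; sy; fold_k; kx; cbv beta; cbn [fst snd Ci RtoC] in *; pdx; cbn [dt_ d1_ d2_]; schw; rg.

Definition sS (F : fld spinor) := smoothR (k1 F) /\ smoothR (k2 F) /\ smoothR (k3 F) /\ smoothR (k4 F).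
Lemma smoothS_sS F : smoothS F -> sS F.
Proof. intros [[H1 H2] [H3 H4]]. unfold sS. split. exact H1. split. exact H2. split. exact H3. exact H4. Qed.

Section Gen.
Variable F : fld spinor.
Hypothesis HF : sS F.
Variable v : fld R.
Hypothesis Hv : smoothR v.

Lemma DD t x y : dirac (dirac F) t x y = sopp (boxS F t x y).
Proof. destruct HF as (?&?&?&?). gen. Qed.

Lemma box_rmul t x y : boxS (rmulS v F) t x y =
  sadd (sscal (RtoC (boxR v t x y)) (F t x y))
       (sadd (sscal (RtoC (v t x y)) (boxS F t x y)) (sscal (RtoC (-2)) (Q0 F v t x y))).
Proof. destruct HF as (?&?&?&?). unfold boxR, sumR, Q0, sumS. gen. Qed.


Lemma comm_pd d t x y : dirac (pdS d F) t x y = pdS d (dirac F) t x y.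
Proof. destruct HF as (?&?&?&?). destruct d; gen. Qed.
Lemma comm_Omega t x y : dirac (Omega_hat F) t x y = Omega_hat (dirac F) t x y.
Proof. destruct HF as (?&?&?&?). gen. Qed.
Lemma comm_L1 t x y : dirac (L1_hat F) t x y = L1_hat (dirac F) t x y.
Proof. destruct HF as (?&?&?&?). gen. Qed.
Lemma comm_L2 t x y : dirac (L2_hat F) t x y = L2_hat (dirac F) t x y.
Proof. destruct HF as (?&?&?&?). gen. Qed.
Lemma box_dirac t x y : boxS (dirac F) t x y = dirac (boxS F) t x y.
Proof. destruct HF as (?&?&?&?). gen. Qed.
End Gen.

Ltac sSt := unfold sS in *; repeat match goal with H : _ /\ _ |- _ => destruct H end;
  kx; cbv beta; refine (conj _ (conj _ (conj _ _))); sm.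

Lemma sS_dirac F : sS F -> sS (dirac F). Proof. intros. sSt. Qed.
Lemma sS_pd F d : sS F -> sS (pdS d F). Proof. intros. sSt. Qed.
Lemma sS_Om F : sS F -> sS (Omega_hat F). Proof. intros. sSt. Qed.
Lemma sS_L1 F : sS F -> sS (L1_hat F). Proof. intros. sSt. Qed.
Lemma sS_L2 F : sS F -> sS (L2_hat F). Proof. intros. sSt. Qed.
Lemma sS_rmul v F : smoothR v -> sS F -> sS (rmulS v F). Proof. intros. sSt. Qed.
Lemma sS_scal c F : sS F -> sS (fun t x y => sscal c (F t x y)). Proof. intros. sSt. Qed.
Lemma sS_add F G : sS F -> sS G -> sS (fun t x y => sadd (F t x y) (G t x y)). Proof. intros. sSt. Qed.
Lemma sS_sub F G : sS F -> sS G -> sS (fun t x y => ssub (F t x y) (G t x y)). Proof. intros. sSt. Qed.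
Lemma sS_opp F : sS F -> sS (fun t x y => sopp (F t x y)). Proof. intros. sSt. Qed.

Section Lin.
Variables F G : fld spinor.
Hypothesis HF : sS F.
Hypothesis HG : sS G.
Variable c : C.
Lemma dirac_add t x y : dirac (fun t x y => sadd (F t x y) (G t x y)) t x y = sadd (dirac F t x y) (dirac G t x y).
Proof. destruct HF as (?&?&?&?), HG as (?&?&?&?). gen. Qed.
Lemma dirac_sub t x y : dirac (fun t x y => ssub (F t x y) (G t x y)) t x y = ssub (dirac F t x y) (dirac G t x y).
Proof. destruct HF as (?&?&?&?), HG as (?&?&?&?). gen. Qed.
Lemma dirac_scal t x y : dirac (fun t x y => sscal c (F t x y)) t x y = sscal c (dirac F t x y).
Proof. destruct HF as (?&?&?&?). gen. Qed.
Lemma dirac_opp t x y : dirac (fun t x y => sopp (F t x y)) t x y = sopp (dirac F t x y).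
Proof. destruct HF as (?&?&?&?). gen. Qed.
Lemma box_sub t x y : boxS (fun t x y => ssub (F t x y) (G t x y)) t x y = ssub (boxS F t x y) (boxS G t x y).
Proof. destruct HF as (?&?&?&?), HG as (?&?&?&?). gen. Qed.
Lemma box_scal t x y : boxS (fun t x y => sscal c (F t x y)) t x y = sscal c (boxS F t x y).
Proof. destruct HF as (?&?&?&?). gen. Qed.
Lemma pd_sub d t x y : pdS d (fun t x y => ssub (F t x y) (G t x y)) t x y = ssub (pdS d F t x y) (pdS d G t x y).
Proof. destruct HF as (?&?&?&?), HG as (?&?&?&?). destruct d; gen. Qed.
Lemma pd_scal d t x y : pdS d (fun t x y => sscal c (F t x y)) t x y = sscal c (pdS d F t x y).
Proof. destruct HF as (?&?&?&?). destruct d; gen. Qed.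
Lemma Om_scal t x y : Omega_hat (fun t x y => sscal c (F t x y)) t x y = sscal c (Omega_hat F t x y).
Proof. destruct HF as (?&?&?&?). gen. Qed.
Lemma L1_scal t x y : L1_hat (fun t x y => sscal c (F t x y)) t x y = sscal c (L1_hat F t x y).
Proof. destruct HF as (?&?&?&?). gen. Qed.
Lemma L2_scal t x y : L2_hat (fun t x y => sscal c (F t x y)) t x y = sscal c (L2_hat F t x y).
Proof. destruct HF as (?&?&?&?). gen. Qed.
End Lin.

Lemma agree_pd (f g : fld R) d t x y : smoothR f -> smoothR g ->
  (forall t x y, 0 <= t -> f t x y = g t x y) -> 0 <= t -> pdR d f t x y = pdR d g t x y.
Proof.
  intros Hf Hg H Ht. destruct d.
  - change (Derive (fun s => f s x y) t = Derive (fun s => g s x y) t).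
    apply half_derive. intros; apply H; lra.
    exact (smooth_ex f Dt t x y Hf). exact (smooth_ex g Dt t x y Hg).
  - change (Derive (fun s => f t s y) x = Derive (fun s => g t s y) x).
    apply Derive_ext. intros; apply H; auto.
  - change (Derive (fun s => f t x s) y = Derive (fun s => g t x s) y).
    apply Derive_ext. intros; apply H; auto.
Qed.

Definition agree (F G : fld spinor) := forall t x y, 0 <= t -> F t x y = G t x y.

Lemma agree_pdS F G d : sS F -> sS G -> agree F G -> agree (pdS d F) (pdS d G).
Proof.
  intros (F1&F2&F3&F4) (G1&G2&G3&G4) H t x y Ht.
  apply spinor_eq.
  - change (pdR d (k1 F) t x y = pdR d (k1 G) t x y). apply agree_pd; auto.
    intros; unfold k1; rewrite H; auto.
  - change (pdR d (k2 F) t x y = pdR d (k2 G) t x y). apply agree_pd; auto.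
    intros; unfold k2; rewrite H; auto.
  - change (pdR d (k3 F) t x y = pdR d (k3 G) t x y). apply agree_pd; auto.
    intros; unfold k3; rewrite H; auto.
  - change (pdR d (k4 F) t x y = pdR d (k4 G) t x y). apply agree_pd; auto.
    intros; unfold k4; rewrite H; auto.
Qed.

Lemma agree_dirac F G : sS F -> sS G -> agree F G -> agree (dirac F) (dirac G).
Proof.
  intros HF HG H t x y Ht. unfold dirac, sumS.
  rewrite (agree_pdS F G Dt HF HG H t x y Ht), (agree_pdS F G D1 HF HG H t x y Ht), (agree_pdS F G D2 HF HG H t x y Ht).
  reflexivity.
Qed.
Lemma agree_Om F G : sS F -> sS G -> agree F G -> agree (Omega_hat F) (Omega_hat G).
Proof.
  intros HF HG H t x y Ht. unfold Omega_hat.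
  rewrite (agree_pdS F G D2 HF HG H t x y Ht), (agree_pdS F G D1 HF HG H t x y Ht), (H t x y Ht).
  reflexivity.
Qed.
Lemma agree_L1 F G : sS F -> sS G -> agree F G -> agree (L1_hat F) (L1_hat G).
Proof.
  intros HF HG H t x y Ht. unfold L1_hat.
  rewrite (agree_pdS F G D1 HF HG H t x y Ht), (agree_pdS F G Dt HF HG H t x y Ht), (H t x y Ht).
  reflexivity.
Qed.
Lemma agree_L2 F G : sS F -> sS G -> agree F G -> agree (L2_hat F) (L2_hat G).
Proof.
  intros HF HG H t x y Ht. unfold L2_hat.
  rewrite (agree_pdS F G D2 HF HG H t x y Ht), (agree_pdS F G Dt HF HG H t x y Ht), (H t x y Ht).
  reflexivity.
Qed.

Definition Dm (F : fld spinor) : fld spinor := fun t x y => sscal (- Ci)%C (dirac F t x y).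

Lemma sS_Dm F : sS F -> sS (Dm F).
Proof. intros. unfold Dm. apply sS_scal. apply sS_dirac; auto. Qed.

Definition Good (op : fld spinor -> fld spinor) :=
  (forall F, sS F -> sS (op F)) /\ (forall F, sS F -> Dm (op F) = op (Dm F)) /\
  (forall F G, sS F -> sS G -> agree F G -> agree (op F) (op G)).

Lemma fext3 (F G : fld spinor) : (forall t x y, F t x y = G t x y) -> F = G.
Proof. intros H. fext. apply H. Qed.

Lemma Good_pd d : Good (pdS d).
Proof.
  split; [|split].
  - intros; apply sS_pd; auto.
  - intros F HF. apply fext3. intros t x y. unfold Dm.
    rewrite (comm_pd F HF). symmetry. apply pd_scal. apply sS_dirac; auto.
  - intros; apply agree_pdS; auto.
Qed.
Lemma Good_Om : Good Omega_hat.
Proof.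
  split; [|split].
  - intros; apply sS_Om; auto.
  - intros F HF. apply fext3. intros t x y. unfold Dm.
    rewrite (comm_Omega F HF). symmetry. apply Om_scal. apply sS_dirac; auto.
  - intros; apply agree_Om; auto.
Qed.
Lemma Good_L1 : Good L1_hat.
Proof.
  split; [|split].
  - intros; apply sS_L1; auto.
  - intros F HF. apply fext3. intros t x y. unfold Dm.
    rewrite (comm_L1 F HF). symmetry. apply L1_scal. apply sS_dirac; auto.
  - intros; apply agree_L1; auto.
Qed.
Lemma Good_L2 : Good L2_hat.
Proof.
  split; [|split].
  - intros; apply sS_L2; auto.
  - intros F HF. apply fext3. intros t x y. unfold Dm.
    rewrite (comm_L2 F HF). symmetry. apply L2_scal. apply sS_dirac; auto.
  - intros; apply agree_L2; auto.
Qed.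

Lemma Good_iter op n : Good op -> Good (Nat.iter n op).
Proof.
  intros [H1 [H2 H3]]. induction n as [|n [I1 [I2 I3]]].
  - split; [|split]; simpl; auto.
  - split; [|split].
    + intros F HF; apply (H1 (Nat.iter n op F)), I1; auto.
    + intros F HF. change (Dm (op (Nat.iter n op F)) = op (Nat.iter n op (Dm F))).
      rewrite H2 by (apply I1; auto). rewrite I2; auto.
    + intros F G HF HG H. apply (H3 (Nat.iter n op F) (Nat.iter n op G)); auto.
Qed.
Lemma Good_comp f g : Good f -> Good g -> Good (fun F => f (g F)).
Proof.
  intros [F1 [F2 F3]] [G1 [G2 G3]]. split; [|split].
  - intros; apply F1, G1; auto.
  - intros F HF. rewrite F2 by (apply G1; auto). rewrite G2; auto.
  - intros F G HF HG H. apply F3; auto.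
Qed.

Lemma Good_GammaI I : Good (GammaI I).
Proof.
  destruct I as [[[[[i1 i2] i3] i4] i5] i6].
  change (Good (fun F => Nat.iter i1 (pdS Dt) (Nat.iter i2 (pdS D1) (Nat.iter i3 (pdS D2)
    (Nat.iter i4 Omega_hat (Nat.iter i5 L1_hat (Nat.iter i6 L2_hat F))))))).
  apply Good_comp. apply Good_iter, Good_pd.
  apply (Good_comp (Nat.iter i2 (pdS D1))). apply Good_iter, Good_pd.
  apply (Good_comp (Nat.iter i3 (pdS D2))). apply Good_iter, Good_pd.
  apply (Good_comp (Nat.iter i4 Omega_hat)). apply Good_iter, Good_Om.
  apply (Good_comp (Nat.iter i5 L1_hat)). apply Good_iter, Good_L1.
  apply Good_iter, Good_L2.
Qed.

Ltac fold_r := repeat match goal with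
  | |- context [fst (?G ?a ?b ?c)] => change (fst (G a b c)) with (r1 G a b c)
  | |- context [snd (?G ?a ?b ?c)] => change (snd (G a b c)) with (r2 G a b c)
  end.

Lemma r1_pd G d : r1 (pdC d G) = pdR d (r1 G). Proof. reflexivity. Qed.
Lemma r2_pd G d : r2 (pdC d G) = pdR d (r2 G). Proof. reflexivity. Qed.
Lemma r1_boxC G : r1 (boxC G) = fun t x y => - pdR Dt (pdR Dt (r1 G)) t x y + pdR D1 (pdR D1 (r1 G)) t x y + pdR D2 (pdR D2 (r1 G)) t x y.
Proof. fext. unfold r1 at 1. unfold boxC, sumC. sy. fold_r. rewrite ?r1_pd, ?r2_pd. rg. Qed.
Lemma r2_boxC G : r2 (boxC G) = fun t x y => - pdR Dt (pdR Dt (r2 G)) t x y + pdR D1 (pdR D1 (r2 G)) t x y + pdR D2 (pdR D2 (r2 G)) t x y.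
Proof. fext. unfold r2 at 1. unfold boxC, sumC. sy. fold_r. rewrite ?r1_pd, ?r2_pd. rg. Qed.
Lemma r1_Cm (A B : fld C) : r1 (fun t x y => (A t x y - B t x y)%C) = fun t x y => r1 A t x y - r1 B t x y.
Proof. reflexivity. Qed.
Lemma r2_Cm (A B : fld C) : r2 (fun t x y => (A t x y - B t x y)%C) = fun t x y => r2 A t x y - r2 B t x y.
Proof. reflexivity. Qed.
Lemma r1_RtoC (v : fld R) : r1 (fun t x y => RtoC (v t x y)) = v. Proof. reflexivity. Qed.
Lemma r2_RtoC (v : fld R) : r2 (fun t x y => RtoC (v t x y)) = fun _ _ _ => 0. Proof. reflexivity. Qed.
Lemma r1_G0 F : r1 (fun t x y => hdot (F t x y) (mv gamma0 (F t x y))) =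
  fun t x y => k1 F t x y * k1 F t x y + k2 F t x y * k2 F t x y - k3 F t x y * k3 F t x y - k4 F t x y * k4 F t x y.
Proof. fext. unfold r1. sy. fold_k. rg. Qed.
Lemma r2_G0 F : r2 (fun t x y => hdot (F t x y) (mv gamma0 (F t x y))) = fun _ _ _ => 0.
Proof. fext. unfold r2. sy. fold_k. rg. Qed.

Ltac rx := repeat progress (rewrite ?r1_boxC, ?r2_boxC, ?r1_Cm, ?r2_Cm, ?r1_RtoC, ?r2_RtoC, ?r1_G0, ?r2_G0, ?r1_pd, ?r2_pd).

Section CG.
Variable F : fld spinor.
Hypothesis HF : sS F.
Variable v : fld R.
Hypothesis Hv : smoothR v.

Lemma box_hdot t x y : boxC (fun t x y => hdot (F t x y) (mv gamma0 (F t x y))) t x y =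
  (hdot (boxS F t x y) (mv gamma0 (F t x y)) + hdot (F t x y) (mv gamma0 (boxS F t x y)) + N4 F t x y)%C.
Proof. destruct HF as (?&?&?&?). unfold N4, sumC. apply C_eq; sy; fold_k; fold_r; rx; kx; cbv beta; pdx; schw; rg. Qed.

Lemma boxC_vt t x y : boxC (fun t x y => (RtoC (v t x y) - hdot (F t x y) (mv gamma0 (F t x y)))%C) t x y =
  (RtoC (boxR v t x y) - boxC (fun t x y => hdot (F t x y) (mv gamma0 (F t x y))) t x y)%C.
Proof. destruct HF as (?&?&?&?). unfold boxR, sumR. apply C_eq; sy; fold_k; fold_r; rx; kx; cbv beta; pdx; schw; rg. Qed.
End CG.

Lemma sS_box F : sS F -> sS (boxS F). Proof. intros. sSt. Qed.
Lemma boxR_k1 F t x y : boxR (k1 F) t x y = k1 (boxS F) t x y.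
Proof. rewrite k1_box. unfold boxR, sumR. cbn [eta]. rg. Qed.
Lemma boxR_k2 F t x y : boxR (k2 F) t x y = k2 (boxS F) t x y.
Proof. rewrite k2_box. unfold boxR, sumR. cbn [eta]. rg. Qed.
Lemma boxR_k3 F t x y : boxR (k3 F) t x y = k3 (boxS F) t x y.
Proof. rewrite k3_box. unfold boxR, sumR. cbn [eta]. rg. Qed.
Lemma boxR_k4 F t x y : boxR (k4 F) t x y = k4 (boxS F) t x y.
Proof. rewrite k4_box. unfold boxR, sumR. cbn [eta]. rg. Qed.

Lemma sscal_inv (a b : spinor) : sscal (- Ci)%C a = b -> a = sscal Ci b.
Proof. intros <-. apply spinor_eq; sy; rg. Qed.

Lemma sopp_inv (a b : spinor) : a = sopp b -> b = sopp a.
Proof. intros ->. apply spinor_eq; sy; rg. Qed.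

Section Main.
Variables psi Psi : fld spinor.
Variable v : fld R.
Hypothesis Hpsi : sS psi.
Hypothesis HPsi : sS Psi.
Hypothesis Hv : smoothR v.
Hypothesis HD : forall t x1 x2, 0 <= t ->
     sscal (- Ci)%C (dirac psi t x1 x2) = sscal (RtoC (v t x1 x2)) (psi t x1 x2).
Hypothesis Hbox : forall t x1 x2, 0 <= t ->
     RtoC (- boxR v t x1 x2 + v t x1 x2) = hdot (psi t x1 x2) (mv gamma0 (psi t x1 x2)).

Lemma HD' : agree (dirac psi) (fun t x y => sscal Ci (rmulS v psi t x y)).
Proof. intros t x y Ht. apply sscal_inv. rewrite HD; auto. Qed.

Lemma E_boxpsi t x y : 0 <= t -> boxS psi t x y = sopp (sscal Ci (dirac (rmulS v psi) t x y)).
Proof.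
  intros Ht. apply sopp_inv. rewrite <- (DD psi Hpsi).
  rewrite (agree_dirac _ _ (sS_dirac _ Hpsi) (sS_scal Ci _ (sS_rmul v psi Hv Hpsi)) HD' t x y Ht).
  symmetry. apply (dirac_scal (rmulS v psi) (sS_rmul v psi Hv Hpsi)).
Qed.

Lemma E_boxv t x y : 0 <= t -> boxR v t x y = v t x y - fst (hdot (psi t x y) (mv gamma0 (psi t x y))).
Proof.
  intros Ht. rewrite <- (Hbox t x y Ht). simpl. ring.
Qed.

Lemma part_i : forall t x1 x2, 0 <= t ->
     let psit := fun t x1 x2 => sadd (psi t x1 x2) (sscal Ci (dirac (rmulS v psi) t x1 x2)) in
     sscal (- Ci)%C (dirac psit t x1 x2)
     = sadd (N1 psi v t x1 x2) (sadd (N2 psi t x1 x2) (sscal (RtoC 2) (Q0 psi v t x1 x2))).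
Proof.
  intros t x y Ht psit. unfold psit.
  assert (HR : sS (rmulS v psi)) by (apply sS_rmul; auto).
  rewrite (dirac_add psi (fun t x y => sscal Ci (dirac (rmulS v psi) t x y))); auto.
  2:{ apply sS_scal, sS_dirac; auto. }
  rewrite (dirac_scal (dirac (rmulS v psi))) by (apply sS_dirac; auto).
  rewrite (DD (rmulS v psi) HR).
  rewrite (box_rmul psi Hpsi v Hv).
  rewrite (E_boxpsi t x y Ht), (E_boxv t x y Ht).
  rewrite (HD' t x y Ht).
  unfold N1, N2, rmulS.
  apply spinor_eq; sy; fold_k; rg.
Qed.

Hypothesis HPbox : forall t x1 x2, 0 <= t ->
     sopp (boxS Psi t x1 x2) = sscal Ci (dirac psi t x1 x2).

Lemma part_ii : forall t x1 x2, 0 <= t ->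
     let Psit := fun t x1 x2 => ssub (Psi t x1 x2) (rmulS v psi t x1 x2) in
     sopp (boxS Psit t x1 x2)
     = sopp (sadd (N1 psi v t x1 x2) (sadd (N2 psi t x1 x2) (sscal (RtoC 2) (Q0 psi v t x1 x2)))).
Proof.
  intros t x y Ht Psit. unfold Psit.
  assert (HR : sS (rmulS v psi)) by (apply sS_rmul; auto).
  rewrite (box_sub Psi (rmulS v psi)); auto.
  rewrite (sopp_inv _ _ (eq_sym (HPbox t x y Ht))).
  rewrite (box_rmul psi Hpsi v Hv).
  rewrite (E_boxpsi t x y Ht), (E_boxv t x y Ht).
  rewrite (HD' t x y Ht).
  unfold N1, N2, rmulS.
  apply spinor_eq; sy; fold_k; rg.
Qed.

Lemma part_iii : forall t x1 x2, 0 <= t ->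
     let vt := fun t x1 x2 =>
       (RtoC (v t x1 x2) - hdot (psi t x1 x2) (mv gamma0 (psi t x1 x2)))%C in
     (- boxC vt t x1 x2 + vt t x1 x2)%C = (N3 psi v t x1 x2 + N4 psi t x1 x2)%C.
Proof.
  intros t x y Ht vt. unfold vt.
  rewrite (boxC_vt psi Hpsi v Hv).
  rewrite (box_hdot psi Hpsi).
  rewrite (E_boxpsi t x y Ht), (E_boxv t x y Ht).
  unfold N3, sumC, dirac, sumS.
  apply C_eq; sy; fold_k; rg.
Qed.

Hypothesis Hinit : forall x1 x2, Psi 0 x1 x2 = szero /\
     pdS Dt Psi 0 x1 x2 = sscal Ci (mv gamma0 (psi 0 x1 x2)).

Lemma zero_slice (f : fld R) x y : (forall s y', f 0 s y' = 0) ->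
  pdR D1 f 0 x y = 0 /\ pdR D2 f 0 x y = 0.
Proof.
  intros H. split.
  - change (Derive (fun s => f 0 s y) x = 0). rewrite (Derive_ext _ (fun _ => 0)). apply Derive_const. intros; apply H.
  - change (Derive (fun s => f 0 x s) y = 0). rewrite (Derive_ext _ (fun _ => 0)). apply Derive_const. intros; apply H.
Qed.
Lemma zero_slice2 (f : fld R) x y : (forall s y', f 0 s y' = 0) ->
  pdR D1 (pdR D1 f) 0 x y = 0 /\ pdR D2 (pdR D2 f) 0 x y = 0.
Proof.
  intros H. split.
  - apply zero_slice. intros; apply zero_slice; auto.
  - apply zero_slice. intros; apply zero_slice; auto.
Qed.
Lemma slice_eq (f g : fld R) x y : (forall s y', f 0 s y' = g 0 s y') ->
  pdR D1 f 0 x y = pdR D1 g 0 x y /\ pdR D2 f 0 x y = pdR D2 g 0 x y.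
Proof.
  intros H. split.
  - change (Derive (fun s => f 0 s y) x = Derive (fun s => g 0 s y) x). apply Derive_ext. intros; apply H.
  - change (Derive (fun s => f 0 x s) y = Derive (fun s => g 0 x s) y). apply Derive_ext. intros; apply H.
Qed.

Lemma Psi0_k s y : k1 Psi 0 s y = 0 /\ k2 Psi 0 s y = 0 /\ k3 Psi 0 s y = 0 /\ k4 Psi 0 s y = 0.
Proof. unfold k1, k2, k3, k4. rewrite (proj1 (Hinit s y)). simpl. auto. Qed.

Lemma PD1 x y : pdS D1 Psi 0 x y = szero.
Proof.
  apply spinor_eq.
  - change (pdR D1 (k1 Psi) 0 x y = 0). apply (proj1 (zero_slice _ x y (fun s y' => proj1 (Psi0_k s y')))).
  - change (pdR D1 (k2 Psi) 0 x y = 0). apply (proj1 (zero_slice _ x y (fun s y' => proj1 (proj2 (Psi0_k s y'))))).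
  - change (pdR D1 (k3 Psi) 0 x y = 0). apply (proj1 (zero_slice _ x y (fun s y' => proj1 (proj2 (proj2 (Psi0_k s y')))))).
  - change (pdR D1 (k4 Psi) 0 x y = 0). apply (proj1 (zero_slice _ x y (fun s y' => proj2 (proj2 (proj2 (Psi0_k s y')))))).
Qed.
Lemma PD2 x y : pdS D2 Psi 0 x y = szero.
Proof.
  apply spinor_eq.
  - change (pdR D2 (k1 Psi) 0 x y = 0). apply (proj2 (zero_slice _ x y (fun s y' => proj1 (Psi0_k s y')))).
  - change (pdR D2 (k2 Psi) 0 x y = 0). apply (proj2 (zero_slice _ x y (fun s y' => proj1 (proj2 (Psi0_k s y'))))).
  - change (pdR D2 (k3 Psi) 0 x y = 0). apply (proj2 (zero_slice _ x y (fun s y' => proj1 (proj2 (proj2 (Psi0_k s y')))))).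
  - change (pdR D2 (k4 Psi) 0 x y = 0). apply (proj2 (zero_slice _ x y (fun s y' => proj2 (proj2 (proj2 (Psi0_k s y')))))).
Qed.

Lemma Ld1_comp (f : fld R) x y : (forall s y', f 0 s y' = 0) ->
  pdR Dt (pdR Dt f) 0 x y = - (- pdR Dt (pdR Dt f) 0 x y + pdR D1 (pdR D1 f) 0 x y + pdR D2 (pdR D2 f) 0 x y).
Proof. intros H. destruct (zero_slice2 f x y H) as [Z1 Z2]. rewrite Z1, Z2. ring. Qed.

Lemma L_d1 x y : pdS Dt (pdS Dt Psi) 0 x y = sscal Ci (dirac psi 0 x y).
Proof.
  rewrite <- (HPbox 0 x y (Rle_refl 0)).
  apply spinor_eq.
  - change (pdR Dt (pdR Dt (k1 Psi)) 0 x y = - k1 (boxS Psi) 0 x y). rewrite k1_box.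
    apply Ld1_comp. intros; apply Psi0_k.
  - change (pdR Dt (pdR Dt (k2 Psi)) 0 x y = - k2 (boxS Psi) 0 x y). rewrite k2_box.
    apply Ld1_comp. intros; apply Psi0_k.
  - change (pdR Dt (pdR Dt (k3 Psi)) 0 x y = - k3 (boxS Psi) 0 x y). rewrite k3_box.
    apply Ld1_comp. intros; apply Psi0_k.
  - change (pdR Dt (pdR Dt (k4 Psi)) 0 x y = - k4 (boxS Psi) 0 x y). rewrite k4_box.
    apply Ld1_comp. intros; apply Psi0_k.
Qed.

Definition H0 := fun t x y => sscal Ci (mv gamma0 (psi t x y)).

Lemma Hinit_k s y' : pdR Dt (k1 Psi) 0 s y' = k1 H0 0 s y' /\ pdR Dt (k2 Psi) 0 s y' = k2 H0 0 s y' /\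
  pdR Dt (k3 Psi) 0 s y' = k3 H0 0 s y' /\ pdR Dt (k4 Psi) 0 s y' = k4 H0 0 s y'.
Proof.
  destruct (Hinit s y') as [_ E].
  repeat split.
  - exact (f_equal (fun u => fst (fst u)) E).
  - exact (f_equal (fun u => snd (fst u)) E).
  - exact (f_equal (fun u => fst (snd u)) E).
  - exact (f_equal (fun u => snd (snd u)) E).
Qed.

Lemma L_d x y d : d <> Dt -> pdS d (pdS Dt Psi) 0 x y = sscal Ci (mv gamma0 (pdS d psi 0 x y)).
Proof.
  intros Hd. destruct Hpsi as (P1&P2&P3&P4).
  assert (E : forall f g, (forall s y', f 0 s y' = g 0 s y') -> pdR d f 0 x y = pdR d g 0 x y).
  { intros f g H. destruct (slice_eq f g x y H). destruct d; auto; congruence. }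
  apply spinor_eq.
  - change (pdR d (pdR Dt (k1 Psi)) 0 x y = fst (fst (sscal Ci (mv gamma0 (pdS d psi 0 x y))))).
    rewrite (E _ (k1 H0)) by (intros; apply Hinit_k). unfold H0. sy; fold_k; kx; cbv beta; cbn [fst snd Ci RtoC]; pdx; etac; rg.
  - change (pdR d (pdR Dt (k2 Psi)) 0 x y = snd (fst (sscal Ci (mv gamma0 (pdS d psi 0 x y))))).
    rewrite (E _ (k2 H0)) by (intros; apply Hinit_k). unfold H0. sy; fold_k; kx; cbv beta; cbn [fst snd Ci RtoC]; pdx; etac; rg.
  - change (pdR d (pdR Dt (k3 Psi)) 0 x y = fst (snd (sscal Ci (mv gamma0 (pdS d psi 0 x y))))).
    rewrite (E _ (k3 H0)) by (intros; apply Hinit_k). unfold H0. sy; fold_k; kx; cbv beta; cbn [fst snd Ci RtoC]; pdx; etac; rg.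
  - change (pdR d (pdR Dt (k4 Psi)) 0 x y = snd (snd (sscal Ci (mv gamma0 (pdS d psi 0 x y))))).
    rewrite (E _ (k4 H0)) by (intros; apply Hinit_k). unfold H0. sy; fold_k; kx; cbv beta; cbn [fst snd Ci RtoC]; pdx; etac; rg.
Qed.

Definition Phi := fun t x y => ssub (Dm Psi t x y) (psi t x y).
Lemma sS_Phi : sS Phi.
Proof. apply sS_sub. apply sS_Dm; auto. auto. Qed.

Lemma agree_boxPsi : agree (boxS Psi) (fun t x y => sopp (sscal Ci (dirac psi t x y))).
Proof. intros t x y Ht. apply sopp_inv. symmetry. apply HPbox; auto. Qed.

Lemma Phi_box t x y : 0 <= t -> boxS Phi t x y = szero.
Proof.
  intros Ht. unfold Phi.
  assert (HdP : sS (dirac Psi)) by (apply sS_dirac; auto).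
  assert (Hdp : sS (dirac psi)) by (apply sS_dirac; auto).
  rewrite (box_sub (Dm Psi) psi); [|apply sS_Dm; auto|auto].
  unfold Dm. rewrite (box_scal (dirac Psi)) by auto.
  rewrite (box_dirac Psi HPsi).
  rewrite (agree_dirac _ _ (sS_box _ HPsi) (sS_opp _ (sS_scal Ci _ Hdp)) agree_boxPsi t x y Ht).
  rewrite (dirac_opp (fun t x y => sscal Ci (dirac psi t x y))) by (apply sS_scal; auto).
  rewrite (dirac_scal (dirac psi)) by auto.
  rewrite (DD psi Hpsi).
  apply spinor_eq; sy; fold_k; rg.
Qed.

Lemma Phi_0 x y : Phi 0 x y = szero.
Proof.
  unfold Phi, Dm, dirac, sumS. rewrite (proj2 (Hinit x y)), PD1, PD2.
  apply spinor_eq; sy; fold_k; rg.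
Qed.

Lemma Phi_t0 x y : pdS Dt Phi 0 x y = szero.
Proof.
  unfold Phi.
  assert (HdP : sS (dirac Psi)) by (apply sS_dirac; auto).
  rewrite (pd_sub (Dm Psi) psi); [|apply sS_Dm; auto|auto].
  unfold Dm. rewrite (pd_scal (dirac Psi)) by auto.
  rewrite <- (comm_pd Psi HPsi).
  unfold dirac, sumS. rewrite L_d1, (L_d x y D1), (L_d x y D2) by discriminate.
  unfold dirac, sumS.
  apply spinor_eq; sy; fold_k; rg.
Qed.

Lemma DmPsi_agree : agree (Dm Psi) psi.
Proof.
  intros t x y Ht.
  destruct sS_Phi as (S1&S2&S3&S4).
  assert (Z : forall (f : fld R), smoothR f ->
     (forall t x y, 0 <= t -> boxR f t x y = 0) -> (forall x y, f 0 x y = 0) ->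
     (forall x y, pdR Dt f 0 x y = 0) -> f t x y = 0).
  { intros f Hf H1 H2 H3. apply wave_unique; auto. }
  assert (Z1 : k1 Phi t x y = 0).
  { apply Z; auto.
    - intros; rewrite boxR_k1; unfold k1; rewrite Phi_box; auto.
    - intros; unfold k1; rewrite Phi_0; auto.
    - intros. change (k1 (pdS Dt Phi) 0 x0 y0 = 0). unfold k1; rewrite Phi_t0; auto. }
  assert (Z2 : k2 Phi t x y = 0).
  { apply Z; auto.
    - intros; rewrite boxR_k2; unfold k2; rewrite Phi_box; auto.
    - intros; unfold k2; rewrite Phi_0; auto.
    - intros. change (k2 (pdS Dt Phi) 0 x0 y0 = 0). unfold k2; rewrite Phi_t0; auto. }
  assert (Z3 : k3 Phi t x y = 0).
  { apply Z; auto.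
    - intros; rewrite boxR_k3; unfold k3; rewrite Phi_box; auto.
    - intros; unfold k3; rewrite Phi_0; auto.
    - intros. change (k3 (pdS Dt Phi) 0 x0 y0 = 0). unfold k3; rewrite Phi_t0; auto. }
  assert (Z4 : k4 Phi t x y = 0).
  { apply Z; auto.
    - intros; rewrite boxR_k4; unfold k4; rewrite Phi_box; auto.
    - intros; unfold k4; rewrite Phi_0; auto.
    - intros. change (k4 (pdS Dt Phi) 0 x0 y0 = 0). unfold k4; rewrite Phi_t0; auto. }
  unfold Phi, k1, k2, k3, k4 in Z1, Z2, Z3, Z4. sy.
  apply spinor_eq; lra.
Qed.

Lemma om_sq x1 x2 : (x1, x2) <> (0, 0) -> om1 x1 x2 * om1 x1 x2 + om2 x1 x2 * om2 x1 x2 = 1.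
Proof.
  intros Hne. unfold om1, om2, rad.
  assert (Hpos : 0 < x1 ^ 2 + x2 ^ 2).
  { destruct (Req_dec x1 0) as [->|H1].
    - destruct (Req_dec x2 0) as [->|H2]; [congruence|]. assert (0 < x2 ^ 2) by (apply pow2_gt_0; auto). lra.
    - assert (0 < x1 ^ 2) by (apply pow2_gt_0; auto). assert (0 <= x2 ^ 2) by apply pow2_ge_0. lra. }
  assert (Hs : 0 < sqrt (x1 ^ 2 + x2 ^ 2)) by (apply sqrt_lt_R0; auto).
  assert (Hss : sqrt (x1 ^ 2 + x2 ^ 2) * sqrt (x1 ^ 2 + x2 ^ 2) = x1 ^ 2 + x2 ^ 2) by (apply sqrt_sqrt; lra).
  set (r := sqrt (x1 ^ 2 + x2 ^ 2)) in *.
  replace (x1 / r * (x1 / r) + x2 / r * (x2 / r)) with ((x1 ^ 2 + x2 ^ 2) / (r * r)) by (field; lra).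
  rewrite Hss. field. lra.
Qed.

Lemma part_iv : forall (I : multi6) t x1 x2, 0 <= t -> (x1, x2) <> (0, 0) ->
     minus_part x1 x2 (GammaI I psi t x1 x2)
     = sscal (- Ci)%C (mv (madd I2 (mscal (RtoC (-1)) (omgg x1 x2)))
                          (gammaG (GammaI I Psi) t x1 x2)).
Proof.
  intros I t x1 x2 Ht Hne.
  destruct (Good_GammaI I) as [G1 [G2 G3]].
  assert (Key : GammaI I psi t x1 x2 = Dm (GammaI I Psi) t x1 x2).
  { rewrite (G2 Psi HPsi). symmetry. apply (G3 (Dm Psi) psi); auto. apply sS_Dm; auto. apply DmPsi_agree. }
  rewrite Key. unfold Dm, dirac, sumS, gammaG.
  assert (Ho := om_sq x1 x2 Hne).
  apply spinor_eq; sy; fold_k; nsatz.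
Qed.
End Main.
Theorem lemma2p14 (psi Psi : fld spinor) (v : fld R) :
  smoothS psi -> smoothS Psi -> smoothR v ->
  (* -i gamma^mu d_mu psi = v psi  on [0,oo) x R^2 *)
  (forall t x1 x2, 0 <= t ->
     sscal (- Ci)%C (dirac psi t x1 x2) = sscal (RtoC (v t x1 x2)) (psi t x1 x2)) ->
  (* -Box v + v = psi^* gamma^0 psi *)
  (forall t x1 x2, 0 <= t ->
     RtoC (- boxR v t x1 x2 + v t x1 x2) = hdot (psi t x1 x2) (mv gamma0 (psi t x1 x2))) ->
  (* -Box Psi = i gamma^mu d_mu psi *)
  (forall t x1 x2, 0 <= t ->
     sopp (boxS Psi t x1 x2) = sscal Ci (dirac psi t x1 x2)) ->
  (* (Psi, d_t Psi)|_{t=0} = (0, i gamma^0 psi(0,.)) *)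
  (forall x1 x2, Psi 0 x1 x2 = szero /\
     pdS Dt Psi 0 x1 x2 = sscal Ci (mv gamma0 (psi 0 x1 x2))) ->
  (* (i) *)
  (forall t x1 x2, 0 <= t ->
     let psit := fun t x1 x2 => sadd (psi t x1 x2) (sscal Ci (dirac (rmulS v psi) t x1 x2)) in
     sscal (- Ci)%C (dirac psit t x1 x2)
     = sadd (N1 psi v t x1 x2) (sadd (N2 psi t x1 x2) (sscal (RtoC 2) (Q0 psi v t x1 x2))))
  /\
  (* (ii) *)
  (forall t x1 x2, 0 <= t ->
     let Psit := fun t x1 x2 => ssub (Psi t x1 x2) (rmulS v psi t x1 x2) in
     sopp (boxS Psit t x1 x2)
     = sopp (sadd (N1 psi v t x1 x2) (sadd (N2 psi t x1 x2) (sscal (RtoC 2) (Q0 psi v t x1 x2)))))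
  /\
  (* (iii) *)
  (forall t x1 x2, 0 <= t ->
     let vt := fun t x1 x2 =>
       (RtoC (v t x1 x2) - hdot (psi t x1 x2) (mv gamma0 (psi t x1 x2)))%C in
     (- boxC vt t x1 x2 + vt t x1 x2)%C = (N3 psi v t x1 x2 + N4 psi t x1 x2)%C)
  /\
  (* (iv) *)
  (forall (I : multi6) t x1 x2, 0 <= t -> (x1, x2) <> (0, 0) ->
     minus_part x1 x2 (GammaI I psi t x1 x2)
     = sscal (- Ci)%C (mv (madd I2 (mscal (RtoC (-1)) (omgg x1 x2)))
                          (gammaG (GammaI I Psi) t x1 x2))).
Proof.
  intros Hpsi HPsi Hv HD Hbox HPbox Hinit.
  apply smoothS_sS in Hpsi. apply smoothS_sS in HPsi.
  split; [|split; [|split]].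
  - eapply part_i; eauto.
  - eapply part_ii; eauto.
  - eapply part_iii; eauto.
  - eapply part_iv; eauto.
Qed.
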